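(* (i) Let $I=[-1,1]$ and let $(\mathcal X_j)_{j\ge1}$ be a sequence of $C^2$-functions $\mathcal X_j: I^2\to \mathbb R$ such that $\partial_x \mathcal X_j$ does not vanish. Let $(\mathcal B_j)_j$ be subsets of $I^2$ with $\mathrm{diam}\,\mathcal B_j\to0$ as $j\to\infty$, and $(x^0_j,y^0_j)\in\mathcal B_j$. Assume that the sequences $\|\partial_x \log|\partial_x \mathcal X_j| \|_{C^0}$ and $\|\partial_y \log|\partial_x \mathcal X_j| \|_{C^0}$ are bounded. Then the maps \[\Upsilon_j : (x,y) \in \mathcal B_j \mapsto \frac{\mathcal X_{j}(x,y)-\mathcal X_{j}(x^0_j,y)}{\partial_x \mathcal X_{j}(x^0_j,y^0_j)} + x^0_j \] are $C^1$-close to the first coordinate projection $(x,y)\mapsto x$ when $j$ is large, i.e. $\sup_{\mathcal B_j}\big(|\Upsilon_j(x,y)-x|+\|D\Upsilon_j(x,y)-(1,0)\|\big)\to 0$ as $j\to\infty$. (ii) Let $\rho>0$, $\tilde I=I+i[-\rho,\rho]$, and let $(\mathcal Z_j)_j$ be holomorphic functions $\mathcal Z_j:\tilde I^2\to\tilde I$ with $0<|\partial_z\mathcal Z_j|<1$. Let $\mathcal B_j\subset\tilde I^2$ and $(z_j,w_j)\in\mathcal B_j$ be such that $\mathrm{diam}\,\mathcal B_j/|\partial_z\mathcal Z_j(z_j,w_j)|\to0$ as $j\to\infty$ and the points $(z_j,w_j)$ stay at distance bounded below by a positive constant from $\partial\tilde I^2$. Then the maps \[ \tilde \Upsilon_j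 : (z,w) \in \mathcal B_j \mapsto \frac{\mathcal Z_{j}(z,w)-\mathcal Z_{j}(z_j,w)}{\partial_z \mathcal Z_{j}(z_j,w_j)} + z_j \] are $C^1$-close to the first coordinate projection $(z,w)\mapsto z$ when $j$ is large, in the same sense. *)

(* Defs.v *)
From Stdlib Require Import Reals.
From Coquelicot Require Import Coquelicot.
Open Scope R_scope.

Definition inI (x : R) : Prop := -1 <= x <= 1.
Definition sq (x y : R) : Prop := inI x /\ inI y.

Definition dist2R (x y x' y' : R) : R := sqrt ((x - x') ^ 2 + (y - y') ^ 2).

(* partial derivatives of f : R^2 -> R at (x,y) within the set S
   (one-sided at the boundary of the closed square) *)
Definition rpartial_x (S : R -> R -> Prop) (f : R -> R -> R) (x y l : R) : Prop :=
  forall eps, 0 < eps -> exists delta, 0 < delta /\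
    forall h, h <> 0 -> Rabs h < delta -> S (x + h) y ->
      Rabs ((f (x + h) y - f x y) / h - l) < eps.

Definition rpartial_y (S : R -> R -> Prop) (f : R -> R -> R) (x y l : R) : Prop :=
  forall eps, 0 < eps -> exists delta, 0 < delta /\
    forall h, h <> 0 -> Rabs h < delta -> S x (y + h) ->
      Rabs ((f x (y + h) - f x y) / h - l) < eps.

Definition cont_on (S : R -> R -> Prop) (g : R -> R -> R) : Prop :=
  forall x y, S x y -> forall eps, 0 < eps -> exists delta, 0 < delta /\
    forall x' y', S x' y' -> dist2R x' y' x y < delta ->
      Rabs (g x' y' - g x y) < eps.

Definition C1_on (S : R -> R -> Prop) (g : R -> R -> R) : Prop :=
  exists gx gy : R -> R -> R,
    (forall x y, S x y -> rpartial_x S g x y (gx x y) /\ rpartial_y S g x y (gy x y)) /\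
    cont_on S g /\ cont_on S gx /\ cont_on S gy.

Definition Upsilon (X X1 : nat -> R -> R -> R) (x0 y0 : nat -> R) (j : nat)
  (x y : R) : R :=
  (X j x y - X j (x0 j) y) / X1 j (x0 j) (y0 j) + x0 j.

Definition inIt (rho : R) (z : C) : Prop :=
  -1 <= Re z <= 1 /\ - rho <= Im z <= rho.
Definition inIt_open (rho : R) (z : C) : Prop :=
  -1 < Re z < 1 /\ - rho < Im z < rho.
Definition sqC (rho : R) (z w : C) : Prop := inIt rho z /\ inIt rho w.
Definition bdryC (rho : R) (z w : C) : Prop :=
  sqC rho z w /\ ~ (inIt_open rho z /\ inIt_open rho w).

Definition norm2C (h k : C) : R := sqrt (Cmod h ^ 2 + Cmod k ^ 2).
Definition dist2C (z w z' w' : C) : R := norm2C (Cminus z z') (Cminus w w').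

Definition open2C (U : C -> C -> Prop) : Prop :=
  forall z w, U z w -> exists r, 0 < r /\
    forall z' w', dist2C z' w' z w < r -> U z' w'.

Definition cdiff (f : C -> C -> C) (z w : C) : Prop :=
  exists a b : C, forall eps, 0 < eps -> exists delta, 0 < delta /\
    forall h k : C, 0 < norm2C h k < delta ->
      Cmod (Cminus (Cminus (Cminus (f (Cplus z h) (Cplus w k)) (f z w))
                           (Cmult a h)) (Cmult b k))
        <= eps * norm2C h k.

(* f is holomorphic on the closed set K: holomorphic on an open neighbourhood *)
Definition holo_near (K : C -> C -> Prop) (f : C -> C -> C) : Prop :=
  exists U, open2C U /\ (forall z w, K z w -> U z w) /\
    (forall z w, U z w -> cdiff f z w).

Definition cpartial_z (f : C -> C -> C) (z w a : C) : Prop :=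
  forall eps, 0 < eps -> exists delta, 0 < delta /\
    forall h : C, h <> RtoC 0 -> Cmod h < delta ->
      Cmod (Cminus (Cdiv (Cminus (f (Cplus z h) w) (f z w)) h) a) < eps.
Definition cpartial_w (f : C -> C -> C) (z w a : C) : Prop :=
  forall eps, 0 < eps -> exists delta, 0 < delta /\
    forall h : C, h <> RtoC 0 -> Cmod h < delta ->
      Cmod (Cminus (Cdiv (Cminus (f z (Cplus w h)) (f z w)) h) a) < eps.

Definition UpsilonC (Z Zz : nat -> C -> C -> C) (zc wc : nat -> C) (j : nat)
  (z w : C) : C :=
  Cplus (Cdiv (Cminus (Z j z w) (Z j (zc j) w)) (Zz j (zc j) (wc j))) (zc j).

(* Main.v *)
Require Import Defs.
From Stdlib Require Import Reals Lra FunctionalExtensionality.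
From Coquelicot Require Import Coquelicot.
Open Scope R_scope.

Lemma le_eps (x y : R) : (forall eps, 0 < eps -> x <= y + eps) -> x <= y.
Proof.
  intros H. destruct (Rle_or_lt x y) as [h|h]; [exact h|].
  specialize (H ((x - y)/2)). lra.
Qed.

Lemma abs3 x y z : Rabs (x + y + z) <= Rabs x + Rabs y + Rabs z.
Proof.
  eapply Rle_trans; [apply Rabs_triang|].
  pose proof (Rabs_triang x y). lra.
Qed.

Definition rc (f : R -> R) (a b : R) : Prop :=
  forall s, a <= s <= b -> forall eps, 0 < eps -> exists delta, 0 < delta /\
    forall s', a <= s' <= b -> Rabs (s' - s) < delta -> Rabs (f s' - f s) < eps.

Lemma mvt_bound (f : R -> R) (a b K : R) : a <= b -> rc f a b ->
  (forall s, a < s < b -> exists l, is_derive f s l /\ Rabs l <= K) ->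
  Rabs (f b - f a) <= K * (b - a).
Proof.
  intros Hab Hc Hd.
  destruct (Req_dec a b) as [->|Hne].
  { replace (f b - f b) with 0 by ring. rewrite Rabs_R0. lra. }
  assert (Hlt : a < b) by lra.
  assert (HK : 0 <= K).
  { destruct (Hd ((a+b)/2)) as [l [_ Hl]]; [lra|]. pose proof (Rabs_pos l); lra. }
  apply le_eps. intros eps Heps.
  destruct (Hc b ltac:(lra) (eps/2) ltac:(lra)) as [d1 [Hd1 H1]].
  destruct (Hc a ltac:(lra) (eps/2) ltac:(lra)) as [d2 [Hd2 H2]].
  set (eta := Rmin (Rmin d1 d2) ((b - a)/2) / 2).
  assert (He1 : 0 < eta).
  { unfold eta. apply Rmult_lt_0_compat; [|lra].
    apply Rmin_pos; [apply Rmin_pos|]; lra. }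
  assert (He2 : eta < d1 /\ eta < d2 /\ eta < (b - a)/2).
  { unfold eta. pose proof (Rmin_l (Rmin d1 d2) ((b-a)/2)).
    pose proof (Rmin_r (Rmin d1 d2) ((b-a)/2)).
    pose proof (Rmin_l d1 d2). pose proof (Rmin_r d1 d2). lra. }
  assert (Hder : forall x, a < x < b -> is_derive f x (Derive f x)).
  { intros x Hx. destruct (Hd x Hx) as [l [Hl _]].
    apply Derive_correct. exists l. exact Hl. }
  destruct (MVT_gen f (a + eta) (b - eta) (Derive f)) as [c [Hc1 Hc2]].
  { intros x Hx. apply Hder. rewrite Rmin_left in Hx by lra.
    rewrite Rmax_right in Hx by lra. lra. }
  { intros x Hx. rewrite Rmin_left in Hx by lra.
    rewrite Rmax_right in Hx by lra.
    apply continuity_pt_filterlim. apply (ex_derive_continuous (K:=R_AbsRing) (V:=R_NormedModule)).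
    exists (Derive f x). apply Hder. lra. }
  rewrite Rmin_left in Hc1 by lra. rewrite Rmax_right in Hc1 by lra.
  destruct (Hd c ltac:(lra)) as [l [Hl HlK]].
  rewrite (is_derive_unique f c l Hl) in Hc2.
  assert (Hm : Rabs (f (b - eta) - f (a + eta)) <= K * (b - a)).
  { rewrite Hc2, Rabs_mult. rewrite (Rabs_right (b - eta - (a + eta))) by lra.
    apply Rle_trans with (K * (b - eta - (a + eta))).
    - apply Rmult_le_compat_r; lra.
    - apply Rmult_le_compat_l; lra. }
  assert (E1 : Rabs (f (b - eta) - f b) < eps/2).
  { apply H1; [lra|]. replace (b - eta - b) with (- eta) by ring.
    rewrite Rabs_Ropp, Rabs_right; lra. }
  assert (E2 : Rabs (f (a + eta) - f a) < eps/2).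
  { apply H2; [lra|]. replace (a + eta - a) with eta by ring.
    rewrite Rabs_right; lra. }
  replace (f b - f a) with ((f (b - eta) - f (a + eta)) + - (f (b - eta) - f b) + (f (a + eta) - f a)) by ring.
  pose proof (abs3 (f (b - eta) - f (a + eta)) (- (f (b - eta) - f b)) (f (a + eta) - f a)).
  rewrite Rabs_Ropp in H. lra.
Qed.

Lemma mvt_abs (f : R -> R) (a b K : R) : rc f (Rmin a b) (Rmax a b) ->
  (forall s, Rmin a b < s < Rmax a b -> exists l, is_derive f s l /\ Rabs l <= K) ->
  Rabs (f b - f a) <= K * Rabs (b - a).
Proof.
  intros Hc Hd. destruct (Rle_or_lt a b) as [h|h].
  - rewrite Rmin_left in Hc, Hd by lra. rewrite Rmax_right in Hc, Hd by lra.
    rewrite (Rabs_right (b - a)) by lra. apply mvt_bound; auto.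
  - rewrite Rmin_right in Hc, Hd by lra. rewrite Rmax_left in Hc, Hd by lra.
    rewrite <- Rabs_Ropp. replace (- (f b - f a)) with (f a - f b) by ring.
    rewrite (Rabs_left (b - a)) by lra. replace (- (b - a)) with (a - b) by ring.
    apply mvt_bound; auto; lra.
Qed.

Lemma abs_lt_between x d : Rabs x < d -> - d < x < d.
Proof. intros H. split; [apply Rabs_def2 in H; lra | apply Rabs_def2 in H; lra]. Qed.

Lemma rpx_to_derive (g : R -> R -> R) t y l : inI y -> -1 < t < 1 ->
  rpartial_x sq g t y l -> is_derive (fun s => g s y) t l.
Proof.
  intros Hy Ht H. apply is_derive_Reals. intros eps Heps.
  destruct (H eps Heps) as [d [Hd Hh]].
  assert (Hp : 0 < Rmin d (Rmin (1 - t) (t + 1))).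
  { apply Rmin_pos; [lra|apply Rmin_pos; lra]. }
  exists (mkposreal _ Hp). simpl. intros h Hh0 Hhd.
  pose proof (Rmin_l d (Rmin (1 - t) (t + 1))).
  pose proof (Rmin_r d (Rmin (1 - t) (t + 1))).
  pose proof (Rmin_l (1 - t) (t + 1)). pose proof (Rmin_r (1 - t) (t + 1)).
  apply Hh; auto; [lra|]. apply abs_lt_between in Hhd.
  split; [unfold inI; lra | exact Hy].
Qed.

Lemma rpy_to_derive (g : R -> R -> R) x t l : inI x -> -1 < t < 1 ->
  rpartial_y sq g x t l -> is_derive (fun s => g x s) t l.
Proof.
  intros Hy Ht H. apply is_derive_Reals. intros eps Heps.
  destruct (H eps Heps) as [d [Hd Hh]].
  assert (Hp : 0 < Rmin d (Rmin (1 - t) (t + 1))).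
  { apply Rmin_pos; [lra|apply Rmin_pos; lra]. }
  exists (mkposreal _ Hp). simpl. intros h Hh0 Hhd.
  pose proof (Rmin_l d (Rmin (1 - t) (t + 1))).
  pose proof (Rmin_r d (Rmin (1 - t) (t + 1))).
  pose proof (Rmin_l (1 - t) (t + 1)). pose proof (Rmin_r (1 - t) (t + 1)).
  apply Hh; auto; [lra|]. apply abs_lt_between in Hhd.
  split; [exact Hy | unfold inI; lra].
Qed.

Lemma derive_to_rpx (g : R -> R -> R) t y l :
  is_derive (fun s => g s y) t l -> rpartial_x sq g t y l.
Proof.
  intros H. apply is_derive_Reals in H. intros eps Heps.
  destruct (H eps Heps) as [d Hd]. exists d. split; [apply cond_pos|].
  intros h Hh0 Hhd _. apply Hd; auto.
Qed.

Lemma derive_to_rpy (g : R -> R -> R) x t l :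
  is_derive (fun s => g x s) t l -> rpartial_y sq g x t l.
Proof.
  intros H. apply is_derive_Reals in H. intros eps Heps.
  destruct (H eps Heps) as [d Hd]. exists d. split; [apply cond_pos|].
  intros h Hh0 Hhd _. apply Hd; auto.
Qed.

Lemma dist_x x x' y : dist2R x y x' y = Rabs (x - x').
Proof.
  unfold dist2R. replace ((y - y) ^ 2) with 0 by ring. rewrite Rplus_0_r.
  rewrite <- Rsqr_pow2. apply sqrt_Rsqr_abs.
Qed.

Lemma dist_y x y y' : dist2R x y x y' = Rabs (y - y').
Proof.
  unfold dist2R. replace ((x - x) ^ 2) with 0 by ring. rewrite Rplus_0_l.
  rewrite <- Rsqr_pow2. apply sqrt_Rsqr_abs.
Qed.

Lemma cont_rc_x g y a b : cont_on sq g -> inI y -> -1 <= a -> b <= 1 ->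
  rc (fun s => g s y) a b.
Proof.
  intros Hc Hy Ha Hb s Hs eps Heps.
  destruct (Hc s y (conj (conj (Rle_trans _ _ _ Ha (proj1 Hs)) (Rle_trans _ _ _ (proj2 Hs) Hb)) Hy) eps Heps)
    as [d [Hd H]].
  exists d. split; auto. intros s' Hs' Hd'. apply H.
  - split; [unfold inI; lra | exact Hy].
  - rewrite dist_x. exact Hd'.
Qed.

Lemma cont_rc_y g x a b : cont_on sq g -> inI x -> -1 <= a -> b <= 1 ->
  rc (fun s => g x s) a b.
Proof.
  intros Hc Hy Ha Hb s Hs eps Heps.
  destruct (Hc x s (conj Hy (conj (Rle_trans _ _ _ Ha (proj1 Hs)) (Rle_trans _ _ _ (proj2 Hs) Hb))) eps Heps)
    as [d [Hd H]].
  exists d. split; auto. intros s' Hs' Hd'. apply H.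
  - split; [exact Hy | unfold inI; lra].
  - rewrite dist_y. exact Hd'.
Qed.

Lemma rc_comp g h a b : rc g a b -> (forall s, a <= s <= b -> continuity_pt h (g s)) ->
  rc (fun s => h (g s)) a b.
Proof.
  intros Hg Hh s Hs eps Heps.
  destruct (Hh s Hs eps Heps) as [al [Hal H]].
  destruct (Hg s Hs al Hal) as [d [Hd H2]].
  exists d. split; auto. intros s' Hs' Hd'.
  destruct (Req_dec (g s') (g s)) as [E|E].
  - rewrite E. replace (h (g s) - h (g s)) with 0 by ring. rewrite Rabs_R0. exact Heps.
  - apply (H (g s')). split.
    + split; [exact I| auto].
    + simpl. unfold R_dist. apply H2; auto.
Qed.

Lemma lnabs_cont v : v <> 0 -> continuity_pt (fun u => ln (Rabs u)) v.
Proof.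
  intros Hv. apply (continuity_pt_comp Rabs ln v).
  - apply Rcontinuity_abs.
  - apply derivable_continuous_pt.
    exists (/ Rabs v). apply derivable_pt_lim_ln. apply Rabs_pos_lt; auto.
Qed.

Lemma lnabs_derive (g : R -> R) t d : is_derive g t d -> g t <> 0 ->
  is_derive (fun s => ln (Rabs (g s))) t (d / g t).
Proof.
  intros H Hne.
  pose proof (is_derive_Rabs g t d H Hne) as H1.
  pose proof (is_derive_ln (Rabs (g t)) (Rabs_pos_lt _ Hne)) as H2.
  pose proof (is_derive_comp ln (fun s => Rabs (g s)) t _ _ H2 H1) as H3.
  assert (E : scal (sign (g t) * d) (/ Rabs (g t)) = d / g t).
  { unfold scal; simpl; unfold mult; simpl.
    destruct (Rlt_or_le 0 (g t)) as [h|h].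
    - rewrite sign_eq_1, Rabs_right by lra. field. lra.
    - assert (h' : g t < 0) by (destruct h; [lra| congruence]).
      rewrite sign_eq_m1, Rabs_left by lra. field. lra. }
  rewrite <- E. exact H3.
Qed.

Definition LB (f fx fy : R -> R -> R) (M : R) : Prop :=
  (forall x y, sq x y -> rpartial_x sq f x y (fx x y) /\ rpartial_y sq f x y (fy x y)) /\
  cont_on sq f /\ (forall x y, sq x y -> f x y <> 0) /\
  (forall x y L, sq x y -> rpartial_x sq (fun u v => ln (Rabs (f u v))) x y L -> Rabs L <= M) /\
  (forall x y L, sq x y -> rpartial_y sq (fun u v => ln (Rabs (f u v))) x y L -> Rabs L <= M) /\
  0 <= M.

Lemma LB_fx f fx fy M t y : LB f fx fy M -> inI y -> -1 < t < 1 ->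
  Rabs (fx t y) <= M * Rabs (f t y).
Proof.
  intros [Hd [Hc [Hnz [Hlx [Hly HM]]]]] Hy Ht.
  assert (Hs : sq t y) by (split; [unfold inI; lra| exact Hy]).
  pose proof (rpx_to_derive f t y _ Hy Ht (proj1 (Hd t y Hs))) as H1.
  pose proof (lnabs_derive _ t _ H1 (Hnz t y Hs)) as H2.
  pose proof (Hlx t y _ Hs (derive_to_rpx (fun u v => ln (Rabs (f u v))) t y _ H2)) as H3.
  pose proof (Rabs_pos_lt _ (Hnz t y Hs)).
  unfold Rdiv in H3. rewrite Rabs_mult, Rabs_inv in H3.
  apply (Rmult_le_compat_r (Rabs (f t y))) in H3; [|lra].
  rewrite Rmult_assoc, Rinv_l in H3 by lra. lra.
Qed.

Lemma LB_fy f fx fy M x t : LB f fx fy M -> inI x -> -1 < t < 1 ->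
  Rabs (fy x t) <= M * Rabs (f x t).
Proof.
  intros [Hd [Hc [Hnz [Hlx [Hly HM]]]]] Hy Ht.
  assert (Hs : sq x t) by (split; [exact Hy | unfold inI; lra]).
  pose proof (rpy_to_derive f x t _ Hy Ht (proj2 (Hd x t Hs))) as H1.
  pose proof (lnabs_derive _ t _ H1 (Hnz x t Hs)) as H2.
  pose proof (Hly x t _ Hs (derive_to_rpy (fun u v => ln (Rabs (f u v))) x t _ H2)) as H3.
  pose proof (Rabs_pos_lt _ (Hnz x t Hs)).
  unfold Rdiv in H3. rewrite Rabs_mult, Rabs_inv in H3.
  apply (Rmult_le_compat_r (Rabs (f x t))) in H3; [|lra].
  rewrite Rmult_assoc, Rinv_l in H3 by lra. lra.
Qed.

Lemma minmax_in a b : inI a -> inI b -> -1 <= Rmin a b /\ Rmax a b <= 1.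
Proof.
  unfold inI. intros Ha Hb. split.
  - apply Rmin_glb; lra.
  - apply Rmax_lub; lra.
Qed.

Lemma in_minmax a b s : Rmin a b < s < Rmax a b -> inI a -> inI b -> -1 < s < 1.
Proof.
  intros H Ha Hb. destruct (minmax_in a b Ha Hb). lra.
Qed.

Lemma LB_log f fx fy M x1 y1 x2 y2 : LB f fx fy M -> sq x1 y1 -> sq x2 y2 ->
  Rabs (ln (Rabs (f x2 y2)) - ln (Rabs (f x1 y1))) <= M * (Rabs (x2 - x1) + Rabs (y2 - y1)).
Proof.
  intros HL [Hx1 Hy1] [Hx2 Hy2].
  pose proof HL as [Hd [Hc [Hnz [Hlx [Hly HM]]]]].
  assert (A : Rabs (ln (Rabs (f x2 y1)) - ln (Rabs (f x1 y1))) <= M * Rabs (x2 - x1)).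
  { apply (mvt_abs (fun s => ln (Rabs (f s y1)))).
    - destruct (minmax_in x1 x2 Hx1 Hx2).
      apply (rc_comp (fun s => f s y1) (fun u => ln (Rabs u))); [apply cont_rc_x; auto|].
      intros s Hs. apply lnabs_cont. apply Hnz. split; [unfold inI; lra| auto].
    - intros s Hs. pose proof (in_minmax _ _ _ Hs Hx1 Hx2) as Hs'.
      assert (Hsq : sq s y1) by (split; [unfold inI; lra| auto]).
      exists (fx s y1 / f s y1). split.
      + apply (lnabs_derive (fun s => f s y1)); [|apply Hnz; auto].
        apply rpx_to_derive; auto. apply (Hd s y1 Hsq).
      + pose proof (LB_fx f fx fy M s y1 HL Hy1 Hs').
        pose proof (Rabs_pos_lt _ (Hnz s y1 Hsq)).
        unfold Rdiv. rewrite Rabs_mult, Rabs_inv.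
        apply (Rmult_le_reg_r (Rabs (f s y1))); [lra|].
        rewrite Rmult_assoc, Rinv_l by lra. lra. }
  assert (B : Rabs (ln (Rabs (f x2 y2)) - ln (Rabs (f x2 y1))) <= M * Rabs (y2 - y1)).
  { apply (mvt_abs (fun s => ln (Rabs (f x2 s)))).
    - destruct (minmax_in y1 y2 Hy1 Hy2).
      apply (rc_comp (fun s => f x2 s) (fun u => ln (Rabs u))); [apply cont_rc_y; auto|].
      intros s Hs. apply lnabs_cont. apply Hnz. split; [auto | unfold inI; lra].
    - intros s Hs. pose proof (in_minmax _ _ _ Hs Hy1 Hy2) as Hs'.
      assert (Hsq : sq x2 s) by (split; [auto | unfold inI; lra]).
      exists (fy x2 s / f x2 s). split.
      + apply (lnabs_derive (fun s => f x2 s)); [|apply Hnz; auto].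
        apply rpy_to_derive; auto. apply (Hd x2 s Hsq).
      + pose proof (LB_fy f fx fy M x2 s HL Hx2 Hs').
        pose proof (Rabs_pos_lt _ (Hnz x2 s Hsq)).
        unfold Rdiv. rewrite Rabs_mult, Rabs_inv.
        apply (Rmult_le_reg_r (Rabs (f x2 s))); [lra|].
        rewrite Rmult_assoc, Rinv_l by lra. lra. }
  replace (ln (Rabs (f x2 y2)) - ln (Rabs (f x1 y1))) with
    ((ln (Rabs (f x2 y2)) - ln (Rabs (f x2 y1))) + (ln (Rabs (f x2 y1)) - ln (Rabs (f x1 y1)))) by ring.
  eapply Rle_trans; [apply Rabs_triang|]. lra.
Qed.

Lemma abs_diff_I a b : inI a -> inI b -> Rabs (a - b) <= 2.
Proof. unfold inI. intros. apply Rabs_le. lra. Qed.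

Lemma LB_up f fx fy M x1 y1 x2 y2 : LB f fx fy M -> sq x1 y1 -> sq x2 y2 ->
  Rabs (f x2 y2) <= exp (4 * M) * Rabs (f x1 y1).
Proof.
  intros HL H1 H2. pose proof HL as [_ [_ [Hnz [_ [_ HM]]]]].
  pose proof (LB_log f fx fy M x1 y1 x2 y2 HL H1 H2) as H.
  destruct H1 as [Hx1 Hy1]. destruct H2 as [Hx2 Hy2].
  pose proof (abs_diff_I _ _ Hx2 Hx1). pose proof (abs_diff_I _ _ Hy2 Hy1).
  assert (Hle : ln (Rabs (f x2 y2)) <= ln (Rabs (f x1 y1)) + 4 * M).
  { apply Rabs_le_between' in H. nra. }
  pose proof (Rabs_pos_lt _ (Hnz x1 y1 (conj Hx1 Hy1))).
  pose proof (Rabs_pos_lt _ (Hnz x2 y2 (conj Hx2 Hy2))).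
  rewrite <- (exp_ln (Rabs (f x2 y2))) by lra.
  replace (exp (4 * M) * Rabs (f x1 y1)) with (exp (ln (Rabs (f x1 y1)) + 4 * M))
    by (rewrite exp_plus, exp_ln by lra; ring).
  destruct Hle as [h|h]; [left; apply exp_increasing; lra| rewrite h; right; reflexivity].
Qed.

Lemma LB_diff f fx fy M x1 y1 x2 y2 xr yr : LB f fx fy M -> sq x1 y1 -> sq x2 y2 -> sq xr yr ->
  Rabs (f x2 y2 - f x1 y1) <= M * exp (4 * M) * Rabs (f xr yr) * (Rabs (x2 - x1) + Rabs (y2 - y1)).
Proof.
  intros HL [Hx1 Hy1] [Hx2 Hy2] Hr.
  pose proof HL as [Hd [Hc [Hnz [Hlx [Hly HM]]]]].
  assert (A : Rabs (f x2 y1 - f x1 y1) <= M * exp (4 * M) * Rabs (f xr yr) * Rabs (x2 - x1)).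
  { apply (mvt_abs (fun s => f s y1)).
    - destruct (minmax_in x1 x2 Hx1 Hx2). apply cont_rc_x; auto.
    - intros s Hs. pose proof (in_minmax _ _ _ Hs Hx1 Hx2) as Hs'.
      assert (Hsq : sq s y1) by (split; [unfold inI; lra| auto]).
      exists (fx s y1). split.
      + apply rpx_to_derive; auto. apply (Hd s y1 Hsq).
      + pose proof (LB_fx f fx fy M s y1 HL Hy1 Hs').
        pose proof (LB_up f fx fy M xr yr s y1 HL Hr Hsq).
        eapply Rle_trans; [exact H|]. rewrite Rmult_assoc.
        apply Rmult_le_compat_l; auto. }
  assert (B : Rabs (f x2 y2 - f x2 y1) <= M * exp (4 * M) * Rabs (f xr yr) * Rabs (y2 - y1)).
  { apply (mvt_abs (fun s => f x2 s)).
    - destruct (minmax_in y1 y2 Hy1 Hy2). apply cont_rc_y; auto.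
    - intros s Hs. pose proof (in_minmax _ _ _ Hs Hy1 Hy2) as Hs'.
      assert (Hsq : sq x2 s) by (split; [auto | unfold inI; lra]).
      exists (fy x2 s). split.
      + apply rpy_to_derive; auto. apply (Hd x2 s Hsq).
      + pose proof (LB_fy f fx fy M x2 s HL Hx2 Hs').
        pose proof (LB_up f fx fy M xr yr x2 s HL Hr Hsq).
        eapply Rle_trans; [exact H|]. rewrite Rmult_assoc.
        apply Rmult_le_compat_l; auto. }
  replace (f x2 y2 - f x1 y1) with ((f x2 y2 - f x2 y1) + (f x2 y1 - f x1 y1)) by ring.
  eapply Rle_trans; [apply Rabs_triang|]. lra.
Qed.

Lemma rc_minus f g a b : rc f a b -> rc g a b -> rc (fun s => f s - g s) a b.
Proof.
  intros Hf Hg s Hs eps Heps.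
  destruct (Hf s Hs (eps/2) ltac:(lra)) as [d1 [Hd1 H1]].
  destruct (Hg s Hs (eps/2) ltac:(lra)) as [d2 [Hd2 H2]].
  exists (Rmin d1 d2). split; [apply Rmin_pos; auto|]. intros s' Hs' Hd.
  pose proof (Rmin_l d1 d2). pose proof (Rmin_r d1 d2).
  specialize (H1 s' Hs' ltac:(lra)). specialize (H2 s' Hs' ltac:(lra)).
  replace (f s' - g s' - (f s - g s)) with ((f s' - f s) + - (g s' - g s)) by ring.
  eapply Rle_lt_trans; [apply Rabs_triang|]. rewrite Rabs_Ropp. lra.
Qed.

Lemma rc_lin a b c : rc (fun s => c * s) a b.
Proof.
  intros s Hs eps Heps. exists (eps / (Rabs c + 1)). split.
  { apply Rdiv_lt_0_compat; [lra| pose proof (Rabs_pos c); lra]. }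
  intros s' _ Hd. replace (c * s' - c * s) with (c * (s' - s)) by ring.
  rewrite Rabs_mult. pose proof (Rabs_pos c). pose proof (Rabs_pos (s' - s)).
  apply Rle_lt_trans with ((Rabs c + 1) * Rabs (s' - s)); [nra|].
  apply (Rmult_lt_compat_l (Rabs c + 1)) in Hd; [|lra].
  replace ((Rabs c + 1) * (eps / (Rabs c + 1))) with eps in Hd by (field; lra). exact Hd.
Qed.

Lemma abs_le_dist_x x y x' y' : Rabs (x - x') <= dist2R x y x' y'.
Proof.
  unfold dist2R. rewrite <- sqrt_Rsqr_abs. apply sqrt_le_1_alt.
  rewrite Rsqr_pow2. pose proof (pow2_ge_0 (y - y')). lra.
Qed.

Lemma abs_le_dist_y x y x' y' : Rabs (y - y') <= dist2R x y x' y'.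
Proof.
  unfold dist2R. rewrite <- sqrt_Rsqr_abs. apply sqrt_le_1_alt.
  rewrite Rsqr_pow2. pose proof (pow2_ge_0 (x - x')). lra.
Qed.

Lemma sqrt_sum_le u v : sqrt (u ^ 2 + v ^ 2) <= Rabs u + Rabs v.
Proof.
  rewrite <- (sqrt_Rsqr (Rabs u + Rabs v)) by (pose proof (Rabs_pos u); pose proof (Rabs_pos v); lra).
  apply sqrt_le_1_alt. unfold Rsqr.
  pose proof (Rabs_pos u); pose proof (Rabs_pos v).
  replace (u ^ 2) with (Rabs u * Rabs u) by (rewrite <- Rabs_mult; simpl; rewrite Rmult_1_r; apply Rabs_right; nra).
  replace (v ^ 2) with (Rabs v * Rabs v) by (rewrite <- Rabs_mult; simpl; rewrite Rmult_1_r; apply Rabs_right; nra).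
  nra.
Qed.

Lemma rpx_ups (f : R -> R -> R) (g : R -> R) c k x y l : c <> 0 ->
  rpartial_x sq f x y l -> rpartial_x sq (fun u v => (f u v - g v) / c + k) x y (l / c).
Proof.
  intros Hc H eps Heps.
  pose proof (Rabs_pos_lt _ Hc).
  destruct (H (eps * Rabs c) ltac:(nra)) as [d [Hd Hh]].
  exists d. split; auto. intros h Hh0 Hhd Hs.
  specialize (Hh h Hh0 Hhd Hs).
  replace (((f (x + h) y - g y) / c + k - ((f x y - g y) / c + k)) / h - l / c)
    with (((f (x + h) y - f x y) / h - l) / c) by (field; auto).
  unfold Rdiv at 1. rewrite Rabs_mult, Rabs_inv.
  apply (Rmult_lt_reg_r (Rabs c)); auto. rewrite Rmult_assoc, Rinv_l by lra. lra.
Qed.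

Lemma rpy_ups (f : R -> R -> R) c k x x0 y l1 l2 : c <> 0 -> inI x -> inI x0 ->
  rpartial_y sq f x y l1 -> rpartial_y sq f x0 y l2 ->
  rpartial_y sq (fun u v => (f u v - f x0 v) / c + k) x y ((l1 - l2) / c).
Proof.
  intros Hc Hx Hx0 H1 H2 eps Heps.
  pose proof (Rabs_pos_lt _ Hc).
  destruct (H1 (eps * Rabs c / 2) ltac:(nra)) as [d1 [Hd1 Hh1]].
  destruct (H2 (eps * Rabs c / 2) ltac:(nra)) as [d2 [Hd2 Hh2]].
  exists (Rmin d1 d2). split; [apply Rmin_pos; auto|]. intros h Hh0 Hhd Hs.
  pose proof (Rmin_l d1 d2). pose proof (Rmin_r d1 d2).
  specialize (Hh1 h Hh0 ltac:(lra) Hs).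
  specialize (Hh2 h Hh0 ltac:(lra) (conj Hx0 (proj2 Hs))).
  replace (((f x (y + h) - f x0 (y + h)) / c + k - ((f x y - f x0 y) / c + k)) / h - (l1 - l2) / c)
    with ((((f x (y + h) - f x y) / h - l1) + - ((f x0 (y + h) - f x0 y) / h - l2)) / c) by (field; auto).
  unfold Rdiv at 1. rewrite Rabs_mult, Rabs_inv.
  apply (Rmult_lt_reg_r (Rabs c)); auto. rewrite Rmult_assoc, Rinv_l, Rmult_1_r by lra.
  eapply Rle_lt_trans; [apply Rabs_triang|]. rewrite Rabs_Ropp. lra.
Qed.

Lemma between_abs a b s : Rmin a b < s < Rmax a b -> Rabs (s - a) <= Rabs (b - a).
Proof.
  intros H. destruct (Rle_or_lt a b) as [h|h].
  - rewrite Rmin_left, Rmax_right in H by lra.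
    rewrite !Rabs_right by lra. lra.
  - rewrite Rmin_right, Rmax_left in H by lra.
    rewrite !Rabs_left by lra. lra.
Qed.

Lemma b_bound f f1 f2 gx gy M x y x0 xr yr :
  LB f1 gx gy M ->
  (forall x y, sq x y -> rpartial_x sq f x y (f1 x y) /\ rpartial_y sq f x y (f2 x y)) ->
  cont_on sq f -> sq x y -> inI x0 -> sq xr yr ->
  Rabs (f2 x y - f2 x0 y) <= M * exp (4 * M) * Rabs (f1 xr yr) * Rabs (x - x0).
Proof.
  intros HL HX Hc [Hx Hy] Hx0 Hr.
  pose proof HL as [_ [_ [_ [_ [_ HM]]]]].
  set (A := M * exp (4 * M) * Rabs (f1 xr yr)).
  assert (HA : 0 <= A).
  { unfold A. apply Rmult_le_pos; [apply Rmult_le_pos; [auto| left; apply exp_pos]| apply Rabs_pos]. }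
  apply le_eps. intros e He.
  destruct (proj2 (HX x y (conj Hx Hy)) (e/2) ltac:(lra)) as [d1 [Hd1 H1]].
  destruct (proj2 (HX x0 y (conj Hx0 Hy)) (e/2) ltac:(lra)) as [d2 [Hd2 H2]].
  assert (Hk : exists k, k <> 0 /\ Rabs k < d1 /\ Rabs k < d2 /\ inI (y + k)).
  { set (k0 := Rmin (Rmin d1 d2) 1 / 2).
    assert (Hk0 : 0 < k0 /\ k0 < d1 /\ k0 < d2 /\ k0 <= 1/2).
    { unfold k0. pose proof (Rmin_l (Rmin d1 d2) 1). pose proof (Rmin_r (Rmin d1 d2) 1).
      pose proof (Rmin_l d1 d2). pose proof (Rmin_r d1 d2).
      assert (0 < Rmin (Rmin d1 d2) 1) by (apply Rmin_pos; [apply Rmin_pos|]; lra).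
      lra. }
    unfold inI in Hy.
    destruct (Rle_or_lt y 0) as [hy|hy].
    - exists k0. rewrite Rabs_right by lra. unfold inI. repeat split; lra.
    - exists (- k0). rewrite Rabs_Ropp, Rabs_right by lra. unfold inI. repeat split; lra. }
  destruct Hk as [k [Hk0 [Hk1 [Hk2 Hyk]]]].
  assert (Hsk : sq x (y + k)) by (split; auto).
  specialize (H1 k Hk0 Hk1 Hsk).
  specialize (H2 k Hk0 Hk2 (conj Hx0 Hyk)).
  assert (HD : Rabs ((f x (y + k) - f x y) - (f x0 (y + k) - f x0 y)) <= A * Rabs k * Rabs (x - x0)).
  { apply (mvt_abs (fun s => f s (y + k) - f s y) x0 x).
    - destruct (minmax_in x0 x Hx0 Hx).
      apply rc_minus; apply cont_rc_x; auto.
    - intros s Hs. pose proof (in_minmax _ _ _ Hs Hx0 Hx) as Hs'.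
      assert (Hs1 : sq s y) by (split; [unfold inI; lra| auto]).
      assert (Hs2 : sq s (y + k)) by (split; [unfold inI; lra| auto]).
      exists (f1 s (y + k) - f1 s y). split.
      + apply (is_derive_minus (fun s => f s (y + k)) (fun s => f s y)).
        * apply rpx_to_derive; auto. apply (HX s (y + k) Hs2).
        * apply rpx_to_derive; auto. apply (HX s y Hs1).
      + pose proof (LB_diff f1 gx gy M s y s (y + k) xr yr HL Hs1 Hs2 Hr) as HH.
        replace (s - s) with 0 in HH by ring. replace (y + k - y) with k in HH by ring.
        rewrite Rabs_R0, Rplus_0_l in HH. exact HH. }
  pose proof (Rabs_pos_lt _ Hk0).
  replace (f2 x y - f2 x0 y) with
    (((f x (y + k) - f x y) - (f x0 (y + k) - f x0 y)) / k
     + - ((f x (y + k) - f x y) / k - f2 x y) + ((f x0 (y + k) - f x0 y) / k - f2 x0 y))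
    by (field; auto).
  eapply Rle_trans; [apply abs3|]. rewrite Rabs_Ropp.
  unfold Rdiv at 1. rewrite Rabs_mult, Rabs_inv.
  assert (Rabs ((f x (y + k) - f x y) - (f x0 (y + k) - f x0 y)) * / Rabs k <= A * Rabs (x - x0)).
  { apply (Rmult_le_reg_r (Rabs k)); auto. rewrite Rmult_assoc, Rinv_l, Rmult_1_r by lra. nra. }
  lra.
Qed.

Lemma ups_bound f f1 f2 gx gy M x y x0 y0 :
  LB f1 gx gy M ->
  (forall x y, sq x y -> rpartial_x sq f x y (f1 x y) /\ rpartial_y sq f x y (f2 x y)) ->
  cont_on sq f -> sq x y -> sq x0 y0 ->
  Rabs (f x y - f x0 y - f1 x0 y0 * (x - x0)) <=
    M * exp (4 * M) * Rabs (f1 x0 y0) * (Rabs (x - x0) + Rabs (y - y0)) * Rabs (x - x0).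
Proof.
  intros HL HX Hc [Hx Hy] [Hx0 Hy0].
  replace (f x y - f x0 y - f1 x0 y0 * (x - x0)) with
    ((f x y - f1 x0 y0 * x) - (f x0 y - f1 x0 y0 * x0)) by ring.
  apply (mvt_abs (fun s => f s y - f1 x0 y0 * s) x0 x).
  - destruct (minmax_in x0 x Hx0 Hx). apply rc_minus; [apply cont_rc_x; auto| apply rc_lin].
  - intros s Hs. pose proof (in_minmax _ _ _ Hs Hx0 Hx) as Hs'.
    assert (Hs1 : sq s y) by (split; [unfold inI; lra| auto]).
    exists (f1 s y - f1 x0 y0). split.
    + apply (is_derive_minus (fun s => f s y) (fun s => f1 x0 y0 * s)).
      * apply rpx_to_derive; auto. apply (HX s y Hs1).
      * auto_derive; auto. ring.
    + pose proof (LB_diff f1 gx gy M x0 y0 s y x0 y0 HL (conj Hx0 Hy0) Hs1 (conj Hx0 Hy0)) as HH.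
      eapply Rle_trans; [exact HH|].
      pose proof (between_abs _ _ _ Hs). pose proof HL as [_ [_ [_ [_ [_ HM]]]]].
      apply Rmult_le_compat_l; [|lra].
      apply Rmult_le_pos; [apply Rmult_le_pos; [auto| left; apply exp_pos]| apply Rabs_pos].
Qed.

Lemma part1 :
  (forall (X X1 X2 : nat -> R -> R -> R) (B : nat -> R -> R -> Prop)
          (x0 y0 : nat -> R),
     (forall j x y, sq x y ->
        rpartial_x sq (X j) x y (X1 j x y) /\ rpartial_y sq (X j) x y (X2 j x y)) ->
     (forall j, cont_on sq (X j) /\ C1_on sq (X1 j) /\ C1_on sq (X2 j)) ->
     (forall j x y, sq x y -> X1 j x y <> 0) ->
     (forall j x y, B j x y -> sq x y) ->
     (forall eps, 0 < eps -> exists N, forall j, (N <= j)%nat ->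
        forall x y x' y', B j x y -> B j x' y' -> dist2R x y x' y' <= eps) ->
     (forall j, B j (x0 j) (y0 j)) ->
     (exists M, forall j x y L, sq x y ->
        rpartial_x sq (fun u v => ln (Rabs (X1 j u v))) x y L -> Rabs L <= M) ->
     (exists M, forall j x y L, sq x y ->
        rpartial_y sq (fun u v => ln (Rabs (X1 j u v))) x y L -> Rabs L <= M) ->
     forall eps, 0 < eps -> exists N, forall j, (N <= j)%nat ->
       forall x y, B j x y ->
         exists a b,
           rpartial_x sq (Upsilon X X1 x0 y0 j) x y a /\
           rpartial_y sq (Upsilon X X1 x0 y0 j) x y b /\
           Rabs (Upsilon X X1 x0 y0 j x y - x) + sqrt ((a - 1) ^ 2 + b ^ 2) <= eps).
Proof.
  intros X X1 X2 B x0 y0 HX HC Hnz HB Hdiam H0 [M1 HM1] [M2 HM2] eps Heps.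
  set (M := Rmax 0 (Rmax M1 M2)).
  assert (HM : 0 <= M /\ M1 <= M /\ M2 <= M).
  { unfold M. pose proof (Rmax_l 0 (Rmax M1 M2)). pose proof (Rmax_r 0 (Rmax M1 M2)).
    pose proof (Rmax_l M1 M2). pose proof (Rmax_r M1 M2). lra. }
  set (A := M * exp (4 * M)).
  assert (HA : 0 <= A) by (unfold A; apply Rmult_le_pos; [lra| left; apply exp_pos]).
  set (e' := eps / (8 * A + 8)).
  assert (He' : 0 < e') by (unfold e'; apply Rdiv_lt_0_compat; lra).
  destruct (Hdiam e' He') as [N HN]. exists N. intros j Hj x y Hb.
  pose proof (HB j x y Hb) as Hs. pose proof (HB j _ _ (H0 j)) as Hs0.
  pose proof (HN j Hj x y (x0 j) (y0 j) Hb (H0 j)) as Hd.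
  pose proof (abs_le_dist_x x y (x0 j) (y0 j)) as Hdx.
  pose proof (abs_le_dist_y x y (x0 j) (y0 j)) as Hdy.
  destruct (HC j) as [HcX [[gx [gy [Hg1 [Hg2 [Hg3 Hg4]]]]] _]].
  assert (HL : LB (X1 j) gx gy M).
  { split; [exact Hg1|]. split; [exact Hg2|]. split; [apply Hnz|].
    split; [intros; eapply Rle_trans; [eapply HM1; eauto| lra]|].
    split; [intros; eapply Rle_trans; [eapply HM2; eauto| lra]|]. lra. }
  set (c := X1 j (x0 j) (y0 j)).
  assert (Hc : c <> 0) by (apply Hnz; auto).
  pose proof (Rabs_pos_lt _ Hc) as Hcp.
  assert (HXj : forall x y, sq x y -> rpartial_x sq (X j) x y (X1 j x y) /\ rpartial_y sq (X j) x y (X2 j x y))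
    by (intros; apply HX; auto).
  exists (X1 j x y / c), ((X2 j x y - X2 j (x0 j) y) / c).
  destruct Hs as [Hx Hy]. destruct Hs0 as [Hx0 Hy0].
  split; [|split].
  - unfold Upsilon. apply (rpx_ups (X j) (fun v => X j (x0 j) v)); auto.
    apply (HX j x y (conj Hx Hy)).
  - unfold Upsilon. apply rpy_ups; auto.
    + apply (HX j x y (conj Hx Hy)).
    + apply (HX j (x0 j) y (conj Hx0 Hy)).
  - set (D := Rabs (x - x0 j) + Rabs (y - y0 j)).
    assert (HD : D <= 2 * e') by (unfold D; lra).
    assert (HDp : 0 <= D) by (unfold D; pose proof (Rabs_pos (x - x0 j)); pose proof (Rabs_pos (y - y0 j)); lra).
    assert (Ha : Rabs (X1 j x y / c - 1) <= A * D).
    { pose proof (LB_diff (X1 j) gx gy M (x0 j) (y0 j) x y (x0 j) (y0 j) HL (conj Hx0 Hy0) (conj Hx Hy) (conj Hx0 Hy0)) as HH.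
      fold c in HH. replace (X1 j x y / c - 1) with ((X1 j x y - c) / c) by (field; auto).
      unfold Rdiv. rewrite Rabs_mult, Rabs_inv.
      apply (Rmult_le_reg_r (Rabs c)); auto. rewrite Rmult_assoc, Rinv_l, Rmult_1_r by lra.
      unfold A, D. lra. }
    assert (Hbb : Rabs ((X2 j x y - X2 j (x0 j) y) / c) <= A * D).
    { pose proof (b_bound (X j) (X1 j) (X2 j) gx gy M x y (x0 j) (x0 j) (y0 j) HL HXj HcX (conj Hx Hy) Hx0 (conj Hx0 Hy0)) as HH.
      fold c in HH. unfold Rdiv. rewrite Rabs_mult, Rabs_inv.
      apply (Rmult_le_reg_r (Rabs c)); auto. rewrite Rmult_assoc, Rinv_l, Rmult_1_r by lra.
      eapply Rle_trans; [exact HH|]. fold A.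
      assert (Rabs (x - x0 j) <= D) by (unfold D; pose proof (Rabs_pos (y - y0 j)); lra).
      assert (0 <= A * Rabs c) by (apply Rmult_le_pos; lra). nra. }
    assert (Hu : Rabs (Upsilon X X1 x0 y0 j x y - x) <= A * D * 2).
    { pose proof (ups_bound (X j) (X1 j) (X2 j) gx gy M x y (x0 j) (y0 j) HL HXj HcX (conj Hx Hy) (conj Hx0 Hy0)) as HH.
      fold c in HH. unfold Upsilon. fold c.
      replace ((X j x y - X j (x0 j) y) / c + x0 j - x) with ((X j x y - X j (x0 j) y - c * (x - x0 j)) / c) by (field; auto).
      unfold Rdiv. rewrite Rabs_mult, Rabs_inv.
      apply (Rmult_le_reg_r (Rabs c)); auto. rewrite Rmult_assoc, Rinv_l, Rmult_1_r by lra.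
      eapply Rle_trans; [exact HH|]. fold A. fold D.
      pose proof (abs_diff_I _ _ Hx Hx0).
      assert (0 <= A * Rabs c * D) by (apply Rmult_le_pos; [apply Rmult_le_pos|]; lra). nra. }
    pose proof (sqrt_sum_le (X1 j x y / c - 1) ((X2 j x y - X2 j (x0 j) y) / c)).
    assert (A * D <= A * (2 * e')) by (apply Rmult_le_compat_l; lra).
    assert (A * (2 * e') * 4 <= eps).
    { unfold e'. apply (Rmult_le_reg_r (8 * A + 8)); [lra|].
      replace (A * (2 * (eps / (8 * A + 8))) * 4 * (8 * A + 8)) with (8 * A * eps) by (field; lra).
      nra. }
    lra.
Qed.

Definition CD (f : C -> C) (z l : C) : Prop :=
  forall eps, 0 < eps -> exists delta, 0 < delta /\
    forall z', Cmod (z' - z) < delta ->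
      Cmod (f z' - f z - l * (z' - z))%C <= eps * Cmod (z' - z).

Definition Ccont (f : C -> C) (z : C) : Prop :=
  forall eps, 0 < eps -> exists delta, 0 < delta /\
    forall z', Cmod (z' - z) < delta -> Cmod (f z' - f z)%C < eps.

Lemma Cmod_pair a b : Cmod (a, b) = sqrt (a ^ 2 + b ^ 2).
Proof. reflexivity. Qed.

Lemma im_le_Cmod c : Rabs (Im c) <= Cmod c.
Proof.
  destruct c as [x y]. rewrite Cmod_pair. simpl.
  rewrite <- sqrt_Rsqr_abs. apply sqrt_le_1_alt. rewrite Rsqr_pow2.
  pose proof (pow2_ge_0 x). lra.
Qed.

Lemma Cmod_le_sum c : Cmod c <= Rabs (Re c) + Rabs (Im c).
Proof. destruct c as [x y]. rewrite Cmod_pair. apply sqrt_sum_le. Qed.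

Lemma Cmod_minus_tri a b : Cmod (a - b) <= Cmod a + Cmod b.
Proof.
  unfold Cminus. eapply Rle_trans; [apply Cmod_triangle|]. rewrite Cmod_opp. lra.
Qed.

Lemma Cmod_tri3 a b c : Cmod (a + b + c) <= Cmod a + Cmod b + Cmod c.
Proof.
  eapply Rle_trans; [apply Cmod_triangle|].
  pose proof (Cmod_triangle a b). lra.
Qed.

Lemma Ceq (z w : C) : Re z = Re w -> Im z = Im w -> z = w.
Proof. destruct z, w. simpl. intros -> ->. reflexivity. Qed.

Lemma CD_cont f z l : CD f z l -> Ccont f z.
Proof.
  intros H eps Heps.
  destruct (H 1 Rlt_0_1) as [d [Hd Hh]].
  pose proof (Cmod_ge_0 l).
  exists (Rmin d (eps / (Cmod l + 2))). split.
  { apply Rmin_pos; auto. apply Rdiv_lt_0_compat; lra. }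
  intros z' Hz. pose proof (Rmin_l d (eps / (Cmod l + 2))).
  pose proof (Rmin_r d (eps / (Cmod l + 2))).
  specialize (Hh z' ltac:(lra)).
  replace (f z' - f z)%C with ((f z' - f z - l * (z' - z)) + l * (z' - z))%C by ring.
  eapply Rle_lt_trans; [apply Cmod_triangle|]. rewrite Cmod_mult.
  pose proof (Cmod_ge_0 (z' - z)).
  assert (Cmod (z' - z) * (Cmod l + 2) < eps).
  { assert (Hr : Cmod (z' - z) < eps / (Cmod l + 2)) by lra.
    apply (Rmult_lt_compat_r (Cmod l + 2)) in Hr; [|lra].
    replace (eps / (Cmod l + 2) * (Cmod l + 2)) with eps in Hr by (field; lra). exact Hr. }
  nra.
Qed.

Lemma CD_const (k z : C) : CD (fun _ => k) z 0.
Proof.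
  intros eps Heps. exists 1. split; [lra|]. intros z' _.
  replace (k - k - 0 * (z' - z))%C with (RtoC 0) by ring. rewrite Cmod_0.
  pose proof (Cmod_ge_0 (z' - z)). nra.
Qed.

Lemma CD_id (z : C) : CD (fun x => x) z 1.
Proof.
  intros eps Heps. exists 1. split; [lra|]. intros z' _.
  replace (z' - z - 1 * (z' - z))%C with (RtoC 0) by ring. rewrite Cmod_0.
  pose proof (Cmod_ge_0 (z' - z)). nra.
Qed.

Lemma CD_plus f g z l1 l2 : CD f z l1 -> CD g z l2 -> CD (fun x => f x + g x)%C z (l1 + l2)%C.
Proof.
  intros H1 H2 eps Heps.
  destruct (H1 (eps/2) ltac:(lra)) as [d1 [Hd1 K1]].
  destruct (H2 (eps/2) ltac:(lra)) as [d2 [Hd2 K2]].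
  exists (Rmin d1 d2). split; [apply Rmin_pos; auto|]. intros z' Hz.
  pose proof (Rmin_l d1 d2). pose proof (Rmin_r d1 d2).
  specialize (K1 z' ltac:(lra)). specialize (K2 z' ltac:(lra)).
  replace (f z' + g z' - (f z + g z) - (l1 + l2) * (z' - z))%C with
    ((f z' - f z - l1 * (z' - z)) + (g z' - g z - l2 * (z' - z)))%C by ring.
  eapply Rle_trans; [apply Cmod_triangle|]. lra.
Qed.

Lemma CD_minus f g z l1 l2 : CD f z l1 -> CD g z l2 -> CD (fun x => f x - g x)%C z (l1 - l2)%C.
Proof.
  intros H1 H2 eps Heps.
  destruct (H1 (eps/2) ltac:(lra)) as [d1 [Hd1 K1]].
  destruct (H2 (eps/2) ltac:(lra)) as [d2 [Hd2 K2]].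
  exists (Rmin d1 d2). split; [apply Rmin_pos; auto|]. intros z' Hz.
  pose proof (Rmin_l d1 d2). pose proof (Rmin_r d1 d2).
  specialize (K1 z' ltac:(lra)). specialize (K2 z' ltac:(lra)).
  replace (f z' - g z' - (f z - g z) - (l1 - l2) * (z' - z))%C with
    ((f z' - f z - l1 * (z' - z)) - (g z' - g z - l2 * (z' - z)))%C by ring.
  eapply Rle_trans; [apply Cmod_minus_tri|]. lra.
Qed.

Lemma CD_scal f (k z l : C) : CD f z l -> CD (fun x => k * f x)%C z (k * l)%C.
Proof.
  intros H eps Heps. pose proof (Cmod_ge_0 k).
  destruct (H (eps / (Cmod k + 1)) ltac:(apply Rdiv_lt_0_compat; lra)) as [d [Hd K]].
  exists d. split; auto. intros z' Hz. specialize (K z' Hz).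
  replace (k * f z' - k * f z - k * l * (z' - z))%C with (k * (f z' - f z - l * (z' - z)))%C by ring.
  rewrite Cmod_mult.
  apply Rle_trans with ((Cmod k + 1) * (eps / (Cmod k + 1) * Cmod (z' - z))).
  { pose proof (Cmod_ge_0 (f z' - f z - l * (z' - z))%C). nra. }
  right. field. lra.
Qed.

Lemma CD_shift f z d l : CD f (z + d)%C l -> CD (fun x => f (x + d))%C z l.
Proof.
  intros H eps Heps. destruct (H eps Heps) as [de [Hde K]].
  exists de. split; auto. intros z' Hz.
  replace (z' - z)%C with (z' + d - (z + d))%C by ring. apply K.
  replace (z' + d - (z + d))%C with (z' - z)%C by ring. exact Hz.
Qed.

Lemma CD_mult f g z l1 l2 : CD f z l1 -> CD g z l2 ->
  CD (fun x => f x * g x)%C z (l1 * g z + f z * l2)%C.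
Proof.
  intros H1 H2 eps Heps.
  pose proof (Cmod_ge_0 (g z)). pose proof (Cmod_ge_0 (f z)). pose proof (Cmod_ge_0 l1).
  set (K1 := Cmod (g z) + 1). set (K2 := Cmod (f z) + 1). set (K3 := Cmod l1 + 1).
  assert (0 < K1 /\ 0 < K2 /\ 0 < K3) by (unfold K1, K2, K3; lra).
  destruct (H1 (eps / (3 * K1)) ltac:(apply Rdiv_lt_0_compat; lra)) as [d1 [Hd1 E1]].
  destruct (H2 (eps / (3 * K2)) ltac:(apply Rdiv_lt_0_compat; lra)) as [d2 [Hd2 E2]].
  destruct (CD_cont g z l2 H2 1 Rlt_0_1) as [d3 [Hd3 E3]].
  destruct (CD_cont g z l2 H2 (eps / (3 * K3)) ltac:(apply Rdiv_lt_0_compat; lra)) as [d4 [Hd4 E4]].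
  exists (Rmin (Rmin d1 d2) (Rmin d3 d4)). split.
  { apply Rmin_pos; apply Rmin_pos; auto. }
  intros z' Hz.
  pose proof (Rmin_l (Rmin d1 d2) (Rmin d3 d4)). pose proof (Rmin_r (Rmin d1 d2) (Rmin d3 d4)).
  pose proof (Rmin_l d1 d2). pose proof (Rmin_r d1 d2). pose proof (Rmin_l d3 d4). pose proof (Rmin_r d3 d4).
  specialize (E1 z' ltac:(lra)). specialize (E2 z' ltac:(lra)).
  specialize (E3 z' ltac:(lra)). specialize (E4 z' ltac:(lra)).
  set (r := Cmod (z' - z)). fold r in E1, E2. pose proof (Cmod_ge_0 (z' - z)). fold r in H7.
  replace (f z' * g z' - f z * g z - (l1 * g z + f z * l2) * (z' - z))%C with
    ((f z' - f z - l1 * (z' - z)) * g z' + f z * (g z' - g z - l2 * (z' - z)) + l1 * (z' - z) * (g z' - g z))%C by ring.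
  eapply Rle_trans; [apply Cmod_tri3|]. rewrite !Cmod_mult. fold r.
  assert (Hg' : Cmod (g z') <= K1).
  { unfold K1. replace (g z') with (g z + (g z' - g z))%C by ring.
    eapply Rle_trans; [apply Cmod_triangle|]. lra. }
  assert (A1 : Cmod (f z' - f z - l1 * (z' - z)) * Cmod (g z') <= eps / 3 * r).
  { apply Rle_trans with (eps / (3 * K1) * r * K1).
    - apply Rmult_le_compat; auto using Cmod_ge_0.
    - right. field. lra. }
  assert (A2 : Cmod (f z) * Cmod (g z' - g z - l2 * (z' - z)) <= eps / 3 * r).
  { apply Rle_trans with (K2 * (eps / (3 * K2) * r)).
    - apply Rmult_le_compat; auto using Cmod_ge_0. unfold K2; lra.
    - right. field. lra. }
  assert (A3 : Cmod l1 * r * Cmod (g z' - g z) <= eps / 3 * r).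
  { apply Rle_trans with (K3 * r * (eps / (3 * K3))).
    - apply Rmult_le_compat; [apply Rmult_le_pos; auto| apply Cmod_ge_0 | |lra].
      apply Rmult_le_compat_r; auto. unfold K3; lra.
    - right. field. lra. }
  lra.
Qed.

Lemma CD_inv f z l : CD f z l -> f z <> RtoC 0 ->
  CD (fun x => / f x)%C z (- l * / (f z * f z))%C.
Proof.
  intros H Hnz eps Heps.
  set (a := Cmod (f z)). assert (Ha : 0 < a) by (apply Cmod_gt_0; auto).
  pose proof (Cmod_ge_0 l).
  destruct (CD_cont f z l H (a/2) ltac:(lra)) as [d1 [Hd1 E1]].
  destruct (H (eps * a ^ 2 / 4) ltac:(apply Rdiv_lt_0_compat; [apply Rmult_lt_0_compat; [lra| apply pow_lt; lra]|lra])) as [d2 [Hd2 E2]].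
  destruct (CD_cont f z l H (eps * a ^ 3 / (4 * (Cmod l + 1))) ltac:(apply Rdiv_lt_0_compat; [apply Rmult_lt_0_compat; [lra| apply pow_lt; lra]|lra])) as [d3 [Hd3 E3]].
  exists (Rmin d1 (Rmin d2 d3)). split; [apply Rmin_pos; [|apply Rmin_pos]; auto|].
  intros z' Hz.
  pose proof (Rmin_l d1 (Rmin d2 d3)). pose proof (Rmin_r d1 (Rmin d2 d3)).
  pose proof (Rmin_l d2 d3). pose proof (Rmin_r d2 d3).
  specialize (E1 z' ltac:(lra)). specialize (E2 z' ltac:(lra)). specialize (E3 z' ltac:(lra)).
  assert (Hf' : a / 2 <= Cmod (f z')).
  { pose proof (Cmod_minus_tri (f z') (f z' - f z)%C) as T.
    replace (f z' - (f z' - f z))%C with (f z) in T by ring. fold a in T. lra. }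
  assert (Hnz' : f z' <> RtoC 0).
  { intros E. rewrite E, Cmod_0 in Hf'. lra. }
  set (r := Cmod (z' - z)). fold r in E2. pose proof (Cmod_ge_0 (z' - z)). fold r in H4.
  replace (/ f z' - / f z - - l * / (f z * f z) * (z' - z))%C with
    ((- (f z' - f z - l * (z' - z)) * f z + l * (z' - z) * (f z' - f z)) / (f z * f z * f z'))%C
    by (field; auto).
  rewrite Cmod_div by (repeat apply Cmult_neq_0; auto).
  rewrite !Cmod_mult. fold a.
  apply Rle_trans with ((eps * a ^ 2 / 4 * r * a + Cmod l * r * (eps * a ^ 3 / (4 * (Cmod l + 1)))) / (a * a * (a / 2))).
  - unfold Rdiv at 1. unfold Rdiv at 3.
    apply Rmult_le_compat.
    + apply Cmod_ge_0.
    + left. apply Rinv_0_lt_compat. apply Rmult_lt_0_compat; [nra|].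
      apply Rlt_le_trans with (a/2); lra.
    + eapply Rle_trans; [apply Cmod_triangle|]. rewrite !Cmod_mult, Cmod_opp. fold a. fold r.
      apply Rplus_le_compat.
      * apply Rmult_le_compat_r; lra.
      * apply Rmult_le_compat_l; [apply Rmult_le_pos; [lra| unfold r; apply Cmod_ge_0]| unfold Rdiv in E3; lra].
    + apply Rinv_le_contravar; [apply Rmult_lt_0_compat; nra|].
      apply Rmult_le_compat_l; [nra| lra].
  - assert (0 <= r) by (unfold r; apply Cmod_ge_0).
    replace ((eps * a ^ 2 / 4 * r * a + Cmod l * r * (eps * a ^ 3 / (4 * (Cmod l + 1)))) / (a * a * (a / 2)))
      with (eps * r / 2 + Cmod l / (Cmod l + 1) * (eps * r / 2)) by (field; lra).
    assert (Cmod l / (Cmod l + 1) <= 1).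
    { apply (Rmult_le_reg_r (Cmod l + 1)); [lra|]. unfold Rdiv.
      rewrite Rmult_assoc, Rinv_l by lra. lra. }
    assert (0 <= eps * r / 2) by nra. nra.
Qed.

Definition Rcont (u : C -> R) (z : C) : Prop :=
  forall eps, 0 < eps -> exists delta, 0 < delta /\
    forall z', Cmod (z' - z) < delta -> Rabs (u z' - u z) < eps.

Lemma Re_minus (a b : C) : Re (a - b)%C = Re a - Re b.
Proof. destruct a, b. unfold Cminus, Cplus, Copp. simpl. ring. Qed.
Lemma Im_minus (a b : C) : Im (a - b)%C = Im a - Im b.
Proof. destruct a, b. unfold Cminus, Cplus, Copp. simpl. ring. Qed.

Definition ReF (g : C -> C) := fun z => Re (g z).
Definition ImF (g : C -> C) := fun z => Im (g z).

Lemma Rcont_Re g z : Ccont g z -> Rcont (ReF g) z.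
Proof.
  intros H eps Heps. destruct (H eps Heps) as [d [Hd K]]. exists d. split; auto.
  intros z' Hz. specialize (K z' Hz). unfold ReF.
  eapply Rle_lt_trans; [|exact K].
  replace (Re (g z') - Re (g z)) with (Re (g z' - g z)%C) by (rewrite Re_minus; ring).
  apply re_le_Cmod.
Qed.

Lemma Rcont_Im g z : Ccont g z -> Rcont (ImF g) z.
Proof.
  intros H eps Heps. destruct (H eps Heps) as [d [Hd K]]. exists d. split; auto.
  intros z' Hz. specialize (K z' Hz). unfold ImF.
  eapply Rle_lt_trans; [|exact K].
  replace (Im (g z') - Im (g z)) with (Im (g z' - g z)%C) by (rewrite Im_minus; ring).
  apply im_le_Cmod.
Qed.

Lemma Rcont_lin u v p q z : Rcont u z -> Rcont v z -> Rcont (fun w => p * u w + q * v w) z.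
Proof.
  intros Hu Hv eps Heps.
  pose proof (Rabs_pos p). pose proof (Rabs_pos q).
  destruct (Hu (eps / (2 * (Rabs p + 1))) ltac:(apply Rdiv_lt_0_compat; lra)) as [d1 [Hd1 K1]].
  destruct (Hv (eps / (2 * (Rabs q + 1))) ltac:(apply Rdiv_lt_0_compat; lra)) as [d2 [Hd2 K2]].
  exists (Rmin d1 d2). split; [apply Rmin_pos; auto|]. intros z' Hz.
  pose proof (Rmin_l d1 d2). pose proof (Rmin_r d1 d2).
  specialize (K1 z' ltac:(lra)). specialize (K2 z' ltac:(lra)).
  replace (p * u z' + q * v z' - (p * u z + q * v z)) with (p * (u z' - u z) + q * (v z' - v z)) by ring.
  eapply Rle_lt_trans; [apply Rabs_triang|]. rewrite !Rabs_mult.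
  assert (Rabs p * Rabs (u z' - u z) <= eps / 2).
  { apply Rle_trans with ((Rabs p + 1) * (eps / (2 * (Rabs p + 1)))).
    - apply Rmult_le_compat; try lra; apply Rabs_pos.
    - right. field. lra. }
  assert (Rabs q * Rabs (v z' - v z) < eps / 2).
  { apply Rle_lt_trans with ((Rabs q) * (eps / (2 * (Rabs q + 1)))).
    - apply Rmult_le_compat_l; [apply Rabs_pos| lra].
    - apply Rlt_le_trans with ((Rabs q + 1) * (eps / (2 * (Rabs q + 1)))).
      + apply Rmult_lt_compat_r; [apply Rdiv_lt_0_compat; lra| lra].
      + right. field. lra. }
  lra.
Qed.

Lemma cpt_of (f : R -> R) x0 :
  (forall eps, 0 < eps -> exists delta, 0 < delta /\ forall x, Rabs (x - x0) < delta -> Rabs (f x - f x0) < eps) ->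
  continuous f x0.
Proof.
  intros H. apply continuity_pt_filterlim. intros eps Heps.
  destruct (H eps Heps) as [d [Hd K]]. exists d. split; auto.
  intros x [_ Hx]. apply K. exact Hx.
Qed.

Lemma Cmod_hsh t t' y : Cmod ((t', y) - (t, y))%C = Rabs (t' - t).
Proof.
  unfold Cminus, Cplus, Copp. simpl. rewrite Cmod_pair.
  replace ((y + - y) ^ 2) with 0 by ring. rewrite Rplus_0_r.
  rewrite <- Rsqr_pow2, sqrt_Rsqr_abs. reflexivity.
Qed.

Lemma Cmod_vsh t t' x : Cmod ((x, t') - (x, t))%C = Rabs (t' - t).
Proof.
  unfold Cminus, Cplus, Copp. simpl. rewrite Cmod_pair.
  replace ((x + - x) ^ 2) with 0 by ring. rewrite Rplus_0_l.
  rewrite <- Rsqr_pow2, sqrt_Rsqr_abs. reflexivity.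
Qed.

Definition Hi (u : C -> R) (y a b : R) := RInt (fun t => u (t, y)) a b.
Definition Vi (u : C -> R) (x c d : R) := RInt (fun t => u (x, t)) c d.

Lemma exH u y a b : (forall t, Rmin a b <= t <= Rmax a b -> Rcont u (t, y)) ->
  ex_RInt (fun t => u (t, y)) a b.
Proof.
  intros H. apply (ex_RInt_continuous (V:=R_CompleteNormedModule)). intros t Ht. apply cpt_of.
  intros eps Heps. destruct (H t Ht eps Heps) as [d [Hd K]]. exists d. split; auto.
  intros x Hx. apply K. rewrite Cmod_hsh. exact Hx.
Qed.

Lemma exV u x c d : (forall t, Rmin c d <= t <= Rmax c d -> Rcont u (x, t)) ->
  ex_RInt (fun t => u (x, t)) c d.
Proof.
  intros H. apply (ex_RInt_continuous (V:=R_CompleteNormedModule)). intros t Ht. apply cpt_of.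
  intros eps Heps. destruct (H t Ht eps Heps) as [de [Hd K]]. exists de. split; auto.
  intros y Hy. apply K. rewrite Cmod_vsh. exact Hy.
Qed.

Lemma RChasles (f : R -> R) a b c : ex_RInt f a b -> ex_RInt f b c ->
  RInt f a c = RInt f a b + RInt f b c.
Proof. intros H1 H2. rewrite <- (RInt_Chasles f a b c H1 H2). reflexivity. Qed.

Lemma RInt_lin (f g : R -> R) p q a b : ex_RInt f a b -> ex_RInt g a b ->
  RInt (fun t => p * f t + q * g t) a b = p * RInt f a b + q * RInt g a b.
Proof.
  intros Hf Hg.
  pose proof (RInt_plus (fun t => scal p (f t)) (fun t => scal q (g t)) a b
    (ex_RInt_scal f a b p Hf) (ex_RInt_scal g a b q Hg)) as E.
  pose proof (RInt_scal f a b p Hf) as E1. pose proof (RInt_scal g a b q Hg) as E2.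
  unfold plus, scal in E; simpl in E. unfold scal in E1, E2; simpl in E1, E2.
  unfold mult in *; simpl in *. rewrite <- E1, <- E2. exact E.
Qed.

Definition inRect a b c d (z : C) : Prop := a <= Re z <= b /\ c <= Im z <= d.

Definition CB (g : C -> C) a b c d : Prop :=
  (forall t, a <= t <= b -> Ccont g (t, c) /\ Ccont g (t, d)) /\
  (forall t, c <= t <= d -> Ccont g (a, t) /\ Ccont g (b, t)).

Definition CR (g : C -> C) a b c d : Prop := forall z, inRect a b c d z -> Ccont g z.

Lemma CR_CB g a b c d : a <= b -> c <= d -> CR g a b c d -> CB g a b c d.
Proof.
  intros Hab Hcd H. split; intros t Ht; split; apply H; unfold inRect; simpl; lra.
Qed.

Lemma CR_sub g a b c d a' b' c' d' : a <= a' -> b' <= b -> c <= c' -> d' <= d ->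
  CR g a b c d -> CR g a' b' c' d'.
Proof. intros H1 H2 H3 H4 H z [Hx Hy]. apply H. split; lra. Qed.

Definition cint (g : C -> C) (a b c d : R) : C :=
  (Hi (ReF g) c a b - Hi (ReF g) d a b - Vi (ImF g) b c d + Vi (ImF g) a c d,
   Hi (ImF g) c a b - Hi (ImF g) d a b + Vi (ReF g) b c d - Vi (ReF g) a c d).

Lemma cint_ext g1 g2 a b c d : (forall z, g1 z = g2 z) -> cint g1 a b c d = cint g2 a b c d.
Proof. intros H. assert (g1 = g2) by (apply functional_extensionality; auto). subst. reflexivity. Qed.

Lemma exH_g (u : C -> R) (g : C -> C) a b y :
  (forall t, a <= t <= b -> Ccont g (t, y)) -> a <= b ->
  (forall z, Ccont g z -> Rcont u z) -> ex_RInt (fun t => u (t, y)) a b.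
Proof.
  intros H Hab Hu. apply exH. rewrite Rmin_left, Rmax_right by lra.
  intros t Ht. apply Hu, H, Ht.
Qed.

Lemma exV_g (u : C -> R) (g : C -> C) c d x :
  (forall t, c <= t <= d -> Ccont g (x, t)) -> c <= d ->
  (forall z, Ccont g z -> Rcont u z) -> ex_RInt (fun t => u (x, t)) c d.
Proof.
  intros H Hcd Hu. apply exV. rewrite Rmin_left, Rmax_right by lra.
  intros t Ht. apply Hu, H, Ht.
Qed.

Lemma cint_split_v g a b c d m : CR g a b c d -> a <= m <= b -> c <= d ->
  cint g a b c d = (cint g a m c d + cint g m b c d)%C.
Proof.
  intros H Hm Hcd.
  assert (HH : forall (u : C -> R) y, c <= y <= d -> (forall z, Ccont g z -> Rcont u z) ->
    Hi u y a b = Hi u y a m + Hi u y m b).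
  { intros u y Hy Hu. unfold Hi. apply RChasles.
    - apply (exH_g u g); [|lra|auto]. intros t Ht. apply H. split; simpl; lra.
    - apply (exH_g u g); [|lra|auto]. intros t Ht. apply H. split; simpl; lra. }
  unfold cint. apply Ceq; simpl.
  - rewrite (HH (ReF g) c), (HH (ReF g) d); try lra; try apply Rcont_Re.
  - rewrite (HH (ImF g) c), (HH (ImF g) d); try lra; try apply Rcont_Im.
Qed.

Lemma cint_split_h g a b c d n : CR g a b c d -> c <= n <= d -> a <= b ->
  cint g a b c d = (cint g a b c n + cint g a b n d)%C.
Proof.
  intros H Hn Hab.
  assert (HH : forall (u : C -> R) x, a <= x <= b -> (forall z, Ccont g z -> Rcont u z) ->
    Vi u x c d = Vi u x c n + Vi u x n d).
  { intros u x Hx Hu. unfold Vi. apply RChasles.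
    - apply (exV_g u g); [|lra|auto]. intros t Ht. apply H. split; simpl; lra.
    - apply (exV_g u g); [|lra|auto]. intros t Ht. apply H. split; simpl; lra. }
  unfold cint. apply Ceq; simpl.
  - rewrite (HH (ImF g) b), (HH (ImF g) a); try lra; try apply Rcont_Im.
  - rewrite (HH (ReF g) b), (HH (ReF g) a); try lra; try apply Rcont_Re.
Qed.

Lemma ex_lin (f g : R -> R) p q a b : ex_RInt f a b -> ex_RInt g a b ->
  ex_RInt (fun t => p * f t + q * g t) a b.
Proof.
  intros Hf Hg.
  pose proof (ex_RInt_plus (fun t => scal p (f t)) (fun t => scal q (g t)) a b
     (ex_RInt_scal f a b p Hf) (ex_RInt_scal g a b q Hg)) as H.
  exact H.
Qed.

Lemma RInt_lin4 (f1 f2 f3 f4 : R -> R) p1 p2 p3 p4 a b :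
  ex_RInt f1 a b -> ex_RInt f2 a b -> ex_RInt f3 a b -> ex_RInt f4 a b ->
  RInt (fun t => p1 * f1 t + p2 * f2 t + (p3 * f3 t + p4 * f4 t)) a b =
  p1 * RInt f1 a b + p2 * RInt f2 a b + (p3 * RInt f3 a b + p4 * RInt f4 a b).
Proof.
  intros H1 H2 H3 H4.
  assert (E : RInt (fun t => p1 * f1 t + p2 * f2 t + (p3 * f3 t + p4 * f4 t)) a b =
    RInt (fun t => 1 * (fun t => p1 * f1 t + p2 * f2 t) t + 1 * (fun t => p3 * f3 t + p4 * f4 t) t) a b).
  { apply RInt_ext. intros x _. simpl. ring. }
  rewrite E.
  pose proof (RInt_lin (fun t => p1 * f1 t + p2 * f2 t) (fun t => p3 * f3 t + p4 * f4 t) 1 1 a b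
    (ex_lin f1 f2 p1 p2 a b H1 H2) (ex_lin f3 f4 p3 p4 a b H3 H4)) as E2.
  rewrite E2.
  rewrite (RInt_lin f1 f2 p1 p2 a b H1 H2), (RInt_lin f3 f4 p3 p4 a b H3 H4). match goal with |- ?x = ?y => change (@eq R x y) end; ring.
Qed.

Lemma CB_ex g a b c d : CB g a b c d -> a <= b -> c <= d ->
  ex_RInt (fun t => ReF g (t, c)) a b /\ ex_RInt (fun t => ImF g (t, c)) a b /\
  ex_RInt (fun t => ReF g (t, d)) a b /\ ex_RInt (fun t => ImF g (t, d)) a b /\
  ex_RInt (fun t => ReF g (a, t)) c d /\ ex_RInt (fun t => ImF g (a, t)) c d /\
  ex_RInt (fun t => ReF g (b, t)) c d /\ ex_RInt (fun t => ImF g (b, t)) c d.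
Proof.
  intros [Hh Hv] Hab Hcd.
  refine (conj _ (conj _ (conj _ (conj _ (conj _ (conj _ (conj _ _))))))).
  - apply (exH_g _ g); [intros t Ht; apply (Hh t Ht) | auto | apply Rcont_Re].
  - apply (exH_g _ g); [intros t Ht; apply (Hh t Ht) | auto | apply Rcont_Im].
  - apply (exH_g _ g); [intros t Ht; apply (Hh t Ht) | auto | apply Rcont_Re].
  - apply (exH_g _ g); [intros t Ht; apply (Hh t Ht) | auto | apply Rcont_Im].
  - apply (exV_g _ g); [intros t Ht; apply (Hv t Ht) | auto | apply Rcont_Re].
  - apply (exV_g _ g); [intros t Ht; apply (Hv t Ht) | auto | apply Rcont_Im].
  - apply (exV_g _ g); [intros t Ht; apply (Hv t Ht) | auto | apply Rcont_Re].
  - apply (exV_g _ g); [intros t Ht; apply (Hv t Ht) | auto | apply Rcont_Im].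
Qed.

Lemma cint_lin g1 g2 (k1 k2 : C) a b c d : CB g1 a b c d -> CB g2 a b c d -> a <= b -> c <= d ->
  cint (fun z => k1 * g1 z + k2 * g2 z)%C a b c d = (k1 * cint g1 a b c d + k2 * cint g2 a b c d)%C.
Proof.
  intros H1 H2 Hab Hcd.
  destruct (CB_ex g1 a b c d H1 Hab Hcd) as [A1 [A2 [A3 [A4 [A5 [A6 [A7 A8]]]]]]].
  destruct (CB_ex g2 a b c d H2 Hab Hcd) as [B1 [B2 [B3 [B4 [B5 [B6 [B7 B8]]]]]]].
  assert (ER : ReF (fun z => k1 * g1 z + k2 * g2 z)%C =
    fun z => Re k1 * ReF g1 z + (- Im k1) * ImF g1 z + (Re k2 * ReF g2 z + (- Im k2) * ImF g2 z)).
  { apply functional_extensionality; intro z. unfold ReF, ImF.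
    destruct k1, k2, (g1 z), (g2 z). simpl. ring. }
  assert (EI : ImF (fun z => k1 * g1 z + k2 * g2 z)%C =
    fun z => Re k1 * ImF g1 z + Im k1 * ReF g1 z + (Re k2 * ImF g2 z + Im k2 * ReF g2 z)).
  { apply functional_extensionality; intro z. unfold ReF, ImF.
    destruct k1, k2, (g1 z), (g2 z). simpl. ring. }
  unfold cint. rewrite ER, EI. unfold Hi, Vi.
  rewrite !RInt_lin4 by auto.
  apply Ceq; destruct k1 as [k1r k1i], k2 as [k2r k2i]; simpl; ring.
Qed.

Lemma abs4 x1 x2 x3 x4 : Rabs (x1 - x2 - x3 + x4) <= Rabs x1 + Rabs x2 + Rabs x3 + Rabs x4.
Proof.
  replace (x1 - x2 - x3 + x4) with (x1 + - x2 + - x3 + x4) by ring.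
  eapply Rle_trans; [apply Rabs_triang|].
  pose proof (abs3 x1 (- x2) (- x3)). rewrite !Rabs_Ropp in H. lra.
Qed.

Lemma abs4' x1 x2 x3 x4 : Rabs (x1 - x2 + x3 - x4) <= Rabs x1 + Rabs x2 + Rabs x3 + Rabs x4.
Proof.
  replace (x1 - x2 + x3 - x4) with (x1 + - x2 + x3 + - x4) by ring.
  eapply Rle_trans; [apply Rabs_triang|].
  pose proof (abs3 x1 (- x2) x3). rewrite !Rabs_Ropp in *. lra.
Qed.

Lemma cint_bound g a b c d K : CB g a b c d -> a <= b -> c <= d ->
  (forall t, a <= t <= b -> Cmod (g (t, c)) <= K /\ Cmod (g (t, d)) <= K) ->
  (forall t, c <= t <= d -> Cmod (g (a, t)) <= K /\ Cmod (g (b, t)) <= K) ->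
  Cmod (cint g a b c d) <= 4 * ((b - a) + (d - c)) * K.
Proof.
  intros HC Hab Hcd Hh Hv.
  destruct (CB_ex g a b c d HC Hab Hcd) as [A1 [A2 [A3 [A4 [A5 [A6 [A7 A8]]]]]]].
  assert (HH : forall (u : C -> R) y, (forall z, Rabs (u z) <= Cmod (g z)) -> (y = c \/ y = d) ->
    ex_RInt (fun t => u (t, y)) a b -> Rabs (Hi u y a b) <= (b - a) * K).
  { intros u y Hu Hy He. unfold Hi. apply abs_RInt_le_const; auto.
    intros t Ht. eapply Rle_trans; [apply Hu|]. destruct Hy; subst; apply Hh; auto. }
  assert (VV : forall (u : C -> R) x, (forall z, Rabs (u z) <= Cmod (g z)) -> (x = a \/ x = b) ->
    ex_RInt (fun t => u (x, t)) c d -> Rabs (Vi u x c d) <= (d - c) * K).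
  { intros u x Hu Hx He. unfold Vi. apply abs_RInt_le_const; auto.
    intros t Ht. eapply Rle_trans; [apply Hu|]. destruct Hx; subst; apply Hv; auto. }
  assert (UR : forall z, Rabs (ReF g z) <= Cmod (g z)) by (intros; apply re_le_Cmod).
  assert (UI : forall z, Rabs (ImF g z) <= Cmod (g z)) by (intros; apply im_le_Cmod).
  unfold cint. eapply Rle_trans; [apply Cmod_le_sum|]. simpl.
  pose proof (abs4 (Hi (ReF g) c a b) (Hi (ReF g) d a b) (Vi (ImF g) b c d) (Vi (ImF g) a c d)).
  pose proof (abs4' (Hi (ImF g) c a b) (Hi (ImF g) d a b) (Vi (ReF g) b c d) (Vi (ReF g) a c d)).
  pose proof (HH _ c UR (or_introl eq_refl) A1). pose proof (HH _ d UR (or_intror eq_refl) A3).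
  pose proof (HH _ c UI (or_introl eq_refl) A2). pose proof (HH _ d UI (or_intror eq_refl) A4).
  pose proof (VV _ a UR (or_introl eq_refl) A5). pose proof (VV _ b UR (or_intror eq_refl) A7).
  pose proof (VV _ a UI (or_introl eq_refl) A6). pose proof (VV _ b UI (or_intror eq_refl) A8).
  lra.
Qed.

Lemma RInt_aff p q a b : RInt (fun t => p + q * t) a b = p * (b - a) + q * (b ^ 2 - a ^ 2) / 2.
Proof.
  apply is_RInt_unique.
  assert (E : p * (b - a) + q * (b ^ 2 - a ^ 2) / 2 =
    minus ((fun t => p * t + q * t ^ 2 / 2) b) ((fun t => p * t + q * t ^ 2 / 2) a)).
  { unfold minus, plus, opp; simpl. field. }
  rewrite E. apply (is_RInt_derive (V := R_CompleteNormedModule) (fun t => p * t + q * t ^ 2 / 2) (fun t => p + q * t)).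
  - intros x _. auto_derive; auto. field.
  - intros x _. apply (ex_derive_continuous (K:=R_AbsRing) (V:=R_NormedModule)).
    auto_derive. auto.
Qed.

Lemma Hi_aff P Q S y a b : Hi (fun z => P + Q * Re z + S * Im z) y a b =
  (P + S * y) * (b - a) + Q * (b ^ 2 - a ^ 2) / 2.
Proof.
  unfold Hi. rewrite <- RInt_aff. f_equal. apply functional_extensionality; intro t. simpl. ring.
Qed.

Lemma Vi_aff P Q S x c d : Vi (fun z => P + Q * Re z + S * Im z) x c d =
  (P + Q * x) * (d - c) + S * (d ^ 2 - c ^ 2) / 2.
Proof.
  unfold Vi. rewrite <- RInt_aff. f_equal; try (apply functional_extensionality; intro t; simpl; ring).
Qed.

Lemma cint_aff (al be : C) a b c d : cint (fun z => al + be * z)%C a b c d = RtoC 0.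
Proof.
  assert (ER : ReF (fun z => al + be * z)%C = fun z => Re al + Re be * Re z + (- Im be) * Im z).
  { apply functional_extensionality; intro z. unfold ReF. destruct al, be, z. simpl. ring. }
  assert (EI : ImF (fun z => al + be * z)%C = fun z => Im al + Im be * Re z + Re be * Im z).
  { apply functional_extensionality; intro z. unfold ImF. destruct al, be, z. simpl. ring. }
  unfold cint. rewrite ER, EI, !Hi_aff, !Vi_aff. apply Ceq; simpl; field.
Qed.

Ltac Rring := match goal with |- ?x = ?y => change (@eq R x y) end; ring.

Lemma refl_int (f : R -> R) m s : ex_RInt f (m - s) (m + s) ->
  RInt (fun t => f (2 * m - t)) (m - s) (m + s) = RInt f (m - s) (m + s).
Proof.
  intros H.
  assert (Hsw : ex_RInt f (-1 * (m - s) + 2 * m) (-1 * (m + s) + 2 * m)).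
  { replace (-1 * (m - s) + 2 * m) with (m + s) by ring.
    replace (-1 * (m + s) + 2 * m) with (m - s) by ring. apply ex_RInt_swap; auto. }
  pose proof (RInt_comp_lin f (-1) (2 * m) (m - s) (m + s) Hsw) as E.
  pose proof (ex_RInt_comp_lin f (-1) (2 * m) (m - s) (m + s) Hsw) as Hex1.
  assert (Hex : ex_RInt (fun t => f (2 * m - t)) (m - s) (m + s)).
  { pose proof (ex_RInt_scal _ _ _ (-1) Hex1) as Hex2.
    eapply ex_RInt_ext; [|exact Hex2]. intros x _. unfold scal; simpl; unfold mult; simpl.
    replace (-1 * x + 2 * m) with (2 * m - x) by ring. ring. }
  replace (-1 * (m - s) + 2 * m) with (m + s) in E by ring.
  replace (-1 * (m + s) + 2 * m) with (m - s) in E by ring.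
  rewrite <- (opp_RInt_swap f (m - s) (m + s) H) in E.
  assert (E2 : RInt (fun y => - f (2 * m - y)) (m - s) (m + s) = - RInt f (m - s) (m + s)).
  { etransitivity; [|exact E]. apply RInt_ext. intros x _. unfold scal; simpl; unfold mult; simpl.
    replace (-1 * x + 2 * m) with (2 * m - x) by ring. Rring. }
  assert (E3 : RInt (fun y => - f (2 * m - y)) (m - s) (m + s) = - RInt (fun y => f (2 * m - y)) (m - s) (m + s)).
  { etransitivity; [|exact (RInt_opp _ _ _ Hex)]. reflexivity. }
  rewrite E3 in E2. lra.
Qed.

Lemma cint_even g px py s : 0 <= s -> CB g (px - s) (px + s) (py - s) (py + s) ->
  (forall x y, g (2 * px - x, 2 * py - y) = g (x, y)) ->
  cint g (px - s) (px + s) (py - s) (py + s) = RtoC 0.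
Proof.
  intros Hs HC Hev.
  destruct (CB_ex g _ _ _ _ HC ltac:(lra) ltac:(lra)) as [A1 [A2 [A3 [A4 [A5 [A6 [A7 A8]]]]]]].
  assert (HH : forall u : C -> R, (forall x y, u (2 * px - x, 2 * py - y) = u (x, y)) ->
     ex_RInt (fun t => u (t, py + s)) (px - s) (px + s) ->
     Hi u (py + s) (px - s) (px + s) = Hi u (py - s) (px - s) (px + s)).
  { intros u Hu He. unfold Hi.
    rewrite <- (refl_int (fun t => u (t, py + s)) px s He).
    apply RInt_ext. intros x _. rewrite <- (Hu x (py - s)).
    replace (2 * py - (py - s)) with (py + s) by ring. reflexivity. }
  assert (VV : forall u : C -> R, (forall x y, u (2 * px - x, 2 * py - y) = u (x, y)) ->
     ex_RInt (fun t => u (px + s, t)) (py - s) (py + s) ->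
     Vi u (px + s) (py - s) (py + s) = Vi u (px - s) (py - s) (py + s)).
  { intros u Hu He. unfold Vi.
    rewrite <- (refl_int (fun t => u (px + s, t)) py s He).
    apply RInt_ext. intros x _. rewrite <- (Hu (px - s) x).
    replace (2 * px - (px - s)) with (px + s) by ring. reflexivity. }
  assert (ER : forall x y, ReF g (2 * px - x, 2 * py - y) = ReF g (x, y)) by (intros; unfold ReF; rewrite Hev; auto).
  assert (EI : forall x y, ImF g (2 * px - x, 2 * py - y) = ImF g (x, y)) by (intros; unfold ImF; rewrite Hev; auto).
  unfold cint. rewrite (HH _ ER A3), (HH _ EI A4), (VV _ ER A7), (VV _ EI A8).
  apply Ceq; simpl; ring.
Qed.

Definition k1 (p : C) := fun z => (/ (z - p))%C.
Definition k2 (p : C) := fun z => (/ ((z - p) * (z - p)))%C.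

Lemma sub_neq0 (z p : C) : z <> p -> (z - p)%C <> RtoC 0.
Proof. intros H E. apply H. replace z with (z - p + p)%C by ring. rewrite E. ring. Qed.

Lemma CD_k1 p z : z <> p -> exists l, CD (k1 p) z l.
Proof.
  intros H. unfold k1. eexists.
  apply (CD_inv (fun x => x - p)%C).
  - apply (CD_minus (fun x => x) (fun _ => p)); [apply CD_id| apply CD_const].
  - apply sub_neq0; auto.
Qed.

Lemma CD_k2 p z : z <> p -> exists l, CD (k2 p) z l.
Proof.
  intros H. unfold k2. eexists.
  apply (CD_inv (fun x => (x - p) * (x - p))%C).
  - apply (CD_mult (fun x => x - p)%C (fun x => x - p)%C);
    apply (CD_minus (fun x => x) (fun _ => p)); [apply CD_id| apply CD_const|apply CD_id| apply CD_const].
  - apply Cmult_neq_0; apply sub_neq0; auto.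
Qed.

Lemma k2_even px py x y : k2 (px, py) (2 * px - x, 2 * py - y) = k2 (px, py) (x, y).
Proof.
  unfold k2. f_equal. apply Ceq; simpl; ring.
Qed.

Lemma frac_ge s A : 0 < s -> A ^ 2 <= s ^ 2 -> / (2 * s) <= s / (A ^ 2 + s ^ 2).
Proof.
  intros Hs HA. replace (/ (2 * s)) with (s * / (2 * s ^ 2)) by (field; lra).
  unfold Rdiv. apply Rmult_le_compat_l; [lra|].
  apply Rinv_le_contravar; [pose proof (pow2_ge_0 A); nra | lra].
Qed.

Lemma int_ge_1 (f : R -> R) a s : 0 < s -> ex_RInt f (a - s) (a + s) ->
  (forall t, a - s < t < a + s -> / (2 * s) <= f t) -> 1 <= RInt f (a - s) (a + s).
Proof.
  intros Hs He Hf.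
  assert (E : RInt (fun _ => / (2 * s)) (a - s) (a + s) = 1).
  { rewrite RInt_const. unfold scal; simpl; unfold mult; simpl. field. lra. }
  rewrite <- E. apply RInt_le; auto; [lra|]. apply ex_RInt_const.
Qed.

Lemma sq_le_sq A s : 0 < s -> - s < A < s -> A ^ 2 <= s ^ 2.
Proof. intros. nra. Qed.

Lemma k1_val px py x y : k1 (px, py) (x, y) =
  ((x - px) / ((x - px) ^ 2 + (y - py) ^ 2), - (y - py) / ((x - px) ^ 2 + (y - py) ^ 2)).
Proof. unfold k1. unfold Rminus. reflexivity. Qed.

Lemma Ccont_k1 p z : z <> p -> Ccont (k1 p) z.
Proof. intros H. destruct (CD_k1 p z H) as [l Hl]. apply (CD_cont _ _ _ Hl). Qed.

Lemma RInt_neg (f : R -> R) a b : ex_RInt f a b -> RInt (fun t => - f t) a b = - RInt f a b.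
Proof. intros H. etransitivity; [|exact (RInt_opp _ _ _ H)]. reflexivity. Qed.

Lemma cint_k1_im px py s : 0 < s ->
  4 <= Im (cint (k1 (px, py)) (px - s) (px + s) (py - s) (py + s)).
Proof.
  intros Hs.
  assert (HC : CB (k1 (px, py)) (px - s) (px + s) (py - s) (py + s)).
  { split; intros t Ht; split; apply Ccont_k1; intros E; injection E; intros; lra. }
  destruct (CB_ex _ _ _ _ _ HC ltac:(lra) ltac:(lra)) as [A1 [A2 [A3 [A4 [A5 [A6 [A7 A8]]]]]]].
  unfold cint. simpl.
  assert (B1 : 1 <= Hi (ImF (k1 (px, py))) (py - s) (px - s) (px + s)).
  { unfold Hi. apply int_ge_1; auto. intros t Ht. unfold ImF. rewrite k1_val. cbn [Re Im fst snd].
    replace (- (py - s - py)) with s by ring. replace ((py - s - py) ^ 2) with (s ^ 2) by ring.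
    apply frac_ge; auto. apply sq_le_sq; lra. }
  assert (B2 : 1 <= - Hi (ImF (k1 (px, py))) (py + s) (px - s) (px + s)).
  { unfold Hi. rewrite <- RInt_neg by auto. apply int_ge_1; auto.
    { pose proof (ex_RInt_opp _ _ _ A4) as X. exact X. }
    intros t Ht. unfold ImF. rewrite k1_val. cbn [Re Im fst snd].
    replace (- (- (py + s - py) / ((t - px) ^ 2 + (py + s - py) ^ 2))) with (s / ((t - px) ^ 2 + s ^ 2))
      by (field; pose proof (pow2_ge_0 (t - px)); nra).
    apply frac_ge; auto. apply sq_le_sq; lra. }
  assert (B3 : 1 <= Vi (ReF (k1 (px, py))) (px + s) (py - s) (py + s)).
  { unfold Vi. apply int_ge_1; auto. intros t Ht. unfold ReF. rewrite k1_val. cbn [Re Im fst snd].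
    replace (px + s - px) with s by ring. rewrite Rplus_comm.
    apply frac_ge; auto. apply sq_le_sq; lra. }
  assert (B4 : 1 <= - Vi (ReF (k1 (px, py))) (px - s) (py - s) (py + s)).
  { unfold Vi. rewrite <- RInt_neg by auto. apply int_ge_1; auto.
    { pose proof (ex_RInt_opp _ _ _ A5) as X. exact X. }
    intros t Ht. unfold ReF. rewrite k1_val. cbn [Re Im fst snd].
    replace (- ((px - s - px) / ((px - s - px) ^ 2 + (t - py) ^ 2))) with (s / ((t - py) ^ 2 + s ^ 2))
      by (field; pose proof (pow2_ge_0 (t - py)); nra).
    apply frac_ge; auto. apply sq_le_sq; lra. }
  lra.
Qed.

Definition nextR (g : C -> C) (r : R * R * R * R) : R * R * R * R :=
  let '(a, b, c, d) := r in
  let m := (a + b) / 2 in let n := (c + d) / 2 in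
  let I := Cmod (cint g a b c d) / 4 in
  if Rle_dec I (Cmod (cint g a m c n)) then (a, m, c, n)
  else if Rle_dec I (Cmod (cint g m b c n)) then (m, b, c, n)
  else if Rle_dec I (Cmod (cint g a m n d)) then (a, m, n, d)
  else (m, b, n, d).

Lemma cint_quarters g a b c d : CR g a b c d -> a <= b -> c <= d ->
  cint g a b c d = (cint g a ((a + b) / 2) c ((c + d) / 2) + cint g ((a + b) / 2) b c ((c + d) / 2)
                   + cint g a ((a + b) / 2) ((c + d) / 2) d + cint g ((a + b) / 2) b ((c + d) / 2) d)%C.
Proof.
  intros H Hab Hcd.
  rewrite (cint_split_v g a b c d ((a + b) / 2)) by (auto; lra).
  rewrite (cint_split_h g a ((a + b) / 2) c d ((c + d) / 2)) by (first [apply (CR_sub g a b c d); [lra|lra|lra|lra|exact H] | lra]).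
  rewrite (cint_split_h g ((a + b) / 2) b c d ((c + d) / 2)) by (first [apply (CR_sub g a b c d); [lra|lra|lra|lra|exact H] | lra]).
  ring.
Qed.

Lemma Cmod_sum4 (x1 x2 x3 x4 : C) : Cmod (x1 + x2 + x3 + x4)%C <= Cmod x1 + Cmod x2 + Cmod x3 + Cmod x4.
Proof.
  eapply Rle_trans; [apply Cmod_triangle|]. pose proof (Cmod_tri3 x1 x2 x3). lra.
Qed.

Lemma nextR_spec g a b c d : a <= b -> c <= d -> CR g a b c d ->
  exists a' b' c' d', nextR g (a, b, c, d) = (a', b', c', d') /\
    a <= a' /\ b' <= b /\ c <= c' /\ d' <= d /\ b' - a' = (b - a) / 2 /\ d' - c' = (d - c) / 2 /\
    Cmod (cint g a b c d) <= 4 * Cmod (cint g a' b' c' d').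
Proof.
  intros Hab Hcd H. unfold nextR.
  pose proof (cint_quarters g a b c d H Hab Hcd) as Q.
  destruct (Rle_dec (Cmod (cint g a b c d) / 4) (Cmod (cint g a ((a + b) / 2) c ((c + d) / 2)))).
  { do 4 eexists. split; [reflexivity|]. repeat split; lra. }
  destruct (Rle_dec (Cmod (cint g a b c d) / 4) (Cmod (cint g ((a + b) / 2) b c ((c + d) / 2)))).
  { do 4 eexists. split; [reflexivity|]. repeat split; lra. }
  destruct (Rle_dec (Cmod (cint g a b c d) / 4) (Cmod (cint g a ((a + b) / 2) ((c + d) / 2) d))).
  { do 4 eexists. split; [reflexivity|]. repeat split; lra. }
  do 4 eexists. split; [reflexivity|]. repeat split; try lra.
  pose proof (Cmod_sum4 (cint g a ((a + b) / 2) c ((c + d) / 2)) (cint g ((a + b) / 2) b c ((c + d) / 2))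
                        (cint g a ((a + b) / 2) ((c + d) / 2) d) (cint g ((a + b) / 2) b ((c + d) / 2) d)).
  rewrite <- Q in H0. lra.
Qed.

Fixpoint seqR (g : C -> C) (r0 : R * R * R * R) (n : nat) : R * R * R * R :=
  match n with O => r0 | S k => nextR g (seqR g r0 k) end.

Definition ra (r : R * R * R * R) := let '(a, _, _, _) := r in a.
Definition rb (r : R * R * R * R) := let '(_, b, _, _) := r in b.
Definition rc4 (r : R * R * R * R) := let '(_, _, c, _) := r in c.
Definition rd (r : R * R * R * R) := let '(_, _, _, d) := r in d.

Lemma r_eta (r : R * R * R * R) : r = (ra r, rb r, rc4 r, rd r).
Proof. destruct r as [[[a b] c] d]. reflexivity. Qed.

Lemma seq_inv g a0 b0 c0 d0 : a0 <= b0 -> c0 <= d0 -> CR g a0 b0 c0 d0 ->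
  forall n, let r := seqR g (a0, b0, c0, d0) n in
    a0 <= ra r /\ rb r <= b0 /\ c0 <= rc4 r /\ rd r <= d0 /\
    rb r - ra r = (b0 - a0) / 2 ^ n /\ rd r - rc4 r = (d0 - c0) / 2 ^ n /\
    Cmod (cint g a0 b0 c0 d0) <= 2 ^ n * 2 ^ n * Cmod (cint g (ra r) (rb r) (rc4 r) (rd r)) /\
    ra r <= ra (nextR g r) /\ rb (nextR g r) <= rb r /\ rc4 r <= rc4 (nextR g r) /\ rd (nextR g r) <= rd r.
Proof.
  intros Hab Hcd H n. induction n as [|n IH].
  - cbn [seqR ra rb rc4 rd]. destruct (nextR_spec g a0 b0 c0 d0 Hab Hcd H) as [a' [b' [c' [d' [E Hs]]]]].
    rewrite E. cbn [ra rb rc4 rd]. repeat split; try lra.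
  - cbn [seqR] in IH |- *. set (r := seqR g (a0, b0, c0, d0) n) in *.
    destruct IH as [I1 [I2 [I3 [I4 [I5 [I6 [I7 _]]]]]]].
    assert (P2 : 0 < 2 ^ n) by (apply pow_lt; lra).
    rewrite (r_eta r).
    assert (Q1 : 0 <= (b0 - a0) / 2 ^ n) by (apply Rmult_le_pos; [lra| left; apply Rinv_0_lt_compat; auto]).
    assert (Q2 : 0 <= (d0 - c0) / 2 ^ n) by (apply Rmult_le_pos; [lra| left; apply Rinv_0_lt_compat; auto]).
    assert (Hab' : ra r <= rb r) by lra.
    assert (Hcd' : rc4 r <= rd r) by lra.
    assert (HCr : CR g (ra r) (rb r) (rc4 r) (rd r)) by (apply (CR_sub g a0 b0 c0 d0); auto).
    destruct (nextR_spec g _ _ _ _ Hab' Hcd' HCr) as [a' [b' [c' [d' [E [J1 [J2 [J3 [J4 [J5 [J6 J7]]]]]]]]]]].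
    rewrite E. cbn [ra rb rc4 rd].
    assert (Hab2 : a' <= b') by lra.
    assert (Hcd2 : c' <= d') by lra.
    assert (HCr2 : CR g a' b' c' d') by (apply (CR_sub g (ra r) (rb r) (rc4 r) (rd r)); auto).
    destruct (nextR_spec g _ _ _ _ Hab2 Hcd2 HCr2) as [a'' [b'' [c'' [d'' [E2 [K1 [K2 [K3 [K4 _]]]]]]]]].
    rewrite E2. cbn [ra rb rc4 rd].
    repeat split; try lra.
    + rewrite J5, I5. change (2 ^ S n) with (2 * 2 ^ n). field. lra.
    + rewrite J6, I6. change (2 ^ S n) with (2 * 2 ^ n). field. lra.
    + change (2 ^ S n) with (2 * 2 ^ n). eapply Rle_trans; [exact I7|].
      pose proof (Cmod_ge_0 (cint g a' b' c' d')). nra.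
Qed.

Lemma INR_le_pow2 n : INR n <= 2 ^ n.
Proof.
  induction n as [|n IH]; [simpl; lra|].
  rewrite S_INR. simpl. assert (1 <= 2 ^ n) by (apply pow_R1_Rle; lra). lra.
Qed.

Lemma exists_pow2 D delta : 0 < delta -> exists n : nat, D < delta * 2 ^ n.
Proof.
  intros Hd. destruct (INR_archimed delta D Hd) as [n Hn]. exists n.
  pose proof (INR_le_pow2 n). nra.
Qed.

Lemma CD_aff (al be z : C) : CD (fun z => al + be * z)%C z be.
Proof.
  pose proof (CD_plus (fun _ => al) (fun z => be * z)%C z 0 (be * 1)%C (CD_const al z)
     (CD_scal (fun x => x) be z 1 (CD_id z))) as H.
  intros eps Heps. destruct (H eps Heps) as [d [Hd K]]. exists d. split; auto.
  intros z' Hz. specialize (K z' Hz).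
  replace (be * (z' - z))%C with ((0 + be * 1) * (z' - z))%C by ring. exact K.
Qed.

Lemma Cmod_le_re_im (z : C) : Cmod z <= Rabs (Re z) + Rabs (Im z).
Proof. apply Cmod_le_sum. Qed.

Lemma goursat g a0 b0 c0 d0 : a0 <= b0 -> c0 <= d0 ->
  (forall z, inRect a0 b0 c0 d0 z -> exists l, CD g z l) -> cint g a0 b0 c0 d0 = RtoC 0.
Proof.
  intros Hab Hcd Hg.
  assert (HCR : CR g a0 b0 c0 d0).
  { intros z Hz. destruct (Hg z Hz) as [l Hl]. apply (CD_cont _ _ _ Hl). }
  pose proof (seq_inv g a0 b0 c0 d0 Hab Hcd HCR) as SI.
  set (Sg := seqR g (a0, b0, c0, d0)).
  assert (SI' : forall n, a0 <= ra (Sg n) /\ rb (Sg n) <= b0 /\ c0 <= rc4 (Sg n) /\ rd (Sg n) <= d0 /\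
    rb (Sg n) - ra (Sg n) = (b0 - a0) / 2 ^ n /\ rd (Sg n) - rc4 (Sg n) = (d0 - c0) / 2 ^ n /\
    Cmod (cint g a0 b0 c0 d0) <= 2 ^ n * 2 ^ n * Cmod (cint g (ra (Sg n)) (rb (Sg n)) (rc4 (Sg n)) (rd (Sg n))) /\
    ra (Sg n) <= ra (Sg (Datatypes.S n)) /\ rb (Sg (Datatypes.S n)) <= rb (Sg n) /\
    rc4 (Sg n) <= rc4 (Sg (Datatypes.S n)) /\ rd (Sg (Datatypes.S n)) <= rd (Sg n)).
  { intros n. exact (SI n). }
  clear SI.
  assert (Pos : forall n, ra (Sg n) <= rb (Sg n) /\ rc4 (Sg n) <= rd (Sg n)).
  { intros n. destruct (SI' n) as [_ [_ [_ [_ [E1 [E2 _]]]]]].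
    assert (0 < 2 ^ n) by (apply pow_lt; lra).
    assert (0 <= (b0 - a0) / 2 ^ n) by (apply Rmult_le_pos; [lra| left; apply Rinv_0_lt_compat; auto]).
    assert (0 <= (d0 - c0) / 2 ^ n) by (apply Rmult_le_pos; [lra| left; apply Rinv_0_lt_compat; auto]).
    lra. }
  assert (Mono : forall n m, (n <= m)%nat -> ra (Sg n) <= ra (Sg m) /\ rb (Sg m) <= rb (Sg n) /\
      rc4 (Sg n) <= rc4 (Sg m) /\ rd (Sg m) <= rd (Sg n)).
  { intros n m Hnm. induction Hnm as [|m Hnm IH]; [repeat split; lra|].
    destruct (SI' m) as [_ [_ [_ [_ [_ [_ [_ [M1 [M2 [M3 M4]]]]]]]]]]. lra. }
  assert (AB : forall n m, ra (Sg n) <= rb (Sg m) /\ rc4 (Sg n) <= rd (Sg m)).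
  { intros n m. destruct (Mono n (Nat.max n m) (Nat.le_max_l n m)) as [X1 [_ [X3 _]]].
    destruct (Mono m (Nat.max n m) (Nat.le_max_r n m)) as [_ [Y2 [_ Y4]]].
    destruct (Pos (Nat.max n m)). lra. }
  destruct (completeness (fun x => exists n, x = ra (Sg n))) as [px [Hpx1 Hpx2]].
  { exists b0. intros x [n ->]. destruct (SI' n) as [_ [Hb _]]. destruct (AB n n). lra. }
  { exists (ra (Sg 0%nat)). exists 0%nat. reflexivity. }
  destruct (completeness (fun y => exists n, y = rc4 (Sg n))) as [py [Hpy1 Hpy2]].
  { exists d0. intros x [n ->]. destruct (SI' n) as [_ [_ [_ [Hd _]]]]. destruct (AB n n). lra. }
  { exists (rc4 (Sg 0%nat)). exists 0%nat. reflexivity. }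
  assert (Px : forall n, ra (Sg n) <= px <= rb (Sg n)).
  { intros n. split.
    - apply Hpx1. exists n. reflexivity.
    - apply Hpx2. intros x [k ->]. apply AB. }
  assert (Py : forall n, rc4 (Sg n) <= py <= rd (Sg n)).
  { intros n. split.
    - apply Hpy1. exists n. reflexivity.
    - apply Hpy2. intros x [k ->]. apply AB. }
  assert (Hp : inRect a0 b0 c0 d0 (px, py)).
  { destruct (SI' 0%nat) as [Q1 [Q2 [Q3 [Q4 _]]]]. destruct (Px 0%nat). destruct (Py 0%nat).
    split; simpl; lra. }
  destruct (Hg _ Hp) as [l Hl].
  apply Cmod_eq_0. apply Rle_antisym; [|apply Cmod_ge_0].
  apply le_eps. intros eps Heps. rewrite Rplus_0_l.
  set (D0 := (b0 - a0) + (d0 - c0)).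
  assert (HD0 : 0 <= D0) by (unfold D0; lra).
  set (e' := eps / (4 * (D0 ^ 2 + 1))).
  assert (He' : 0 < e') by (unfold e'; apply Rdiv_lt_0_compat; [lra| pose proof (pow2_ge_0 D0); lra]).
  destruct (Hl e' He') as [de [Hde Kl]].
  destruct (exists_pow2 D0 de Hde) as [n Hn].
  assert (P2 : 0 < 2 ^ n) by (apply pow_lt; lra).
  destruct (SI' n) as [Q1 [Q2 [Q3 [Q4 [Q5 [Q6 [Q7 _]]]]]]].
  set (A := ra (Sg n)). set (B := rb (Sg n)). set (Cc := rc4 (Sg n)). set (Dd := rd (Sg n)).
  fold A B Cc Dd in Q1, Q2, Q3, Q4, Q5, Q6, Q7.
  destruct (Px n) as [Px1 Px2]. destruct (Py n) as [Py1 Py2]. fold A B in Px1, Px2. fold Cc Dd in Py1, Py2.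
  assert (Hsz : (B - A) + (Dd - Cc) = D0 / 2 ^ n) by (rewrite Q5, Q6; unfold D0; field; lra).
  assert (Hsmall : D0 / 2 ^ n < de).
  { apply (Rmult_lt_reg_r (2 ^ n)); auto. unfold Rdiv. rewrite Rmult_assoc, Rinv_l, Rmult_1_r by lra. lra. }
  assert (Hin : forall z, inRect A B Cc Dd z -> Cmod (z - (px, py))%C <= D0 / 2 ^ n).
  { intros z [Hz1 Hz2]. eapply Rle_trans; [apply Cmod_le_re_im|].
    rewrite Re_minus, Im_minus. simpl.
    assert (Rabs (Re z - px) <= B - A) by (apply Rabs_le; lra).
    assert (Rabs (Im z - py) <= Dd - Cc) by (apply Rabs_le; lra). lra. }
  set (al := (g (px, py) - l * (px, py))%C).
  set (aff := fun z => (al + l * z)%C).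
  assert (HCg : CB g A B Cc Dd).
  { apply CR_CB; [lra|lra|]. apply (CR_sub g a0 b0 c0 d0); auto. }
  assert (HCa : CB aff A B Cc Dd).
  { apply CR_CB; [lra|lra|]. intros z _. apply (CD_cont _ _ _ (CD_aff al l z)). }
  pose proof (cint_lin g aff 1 (-(1)) A B Cc Dd HCg HCa ltac:(lra) ltac:(lra)) as EL.
  unfold aff in EL at 2. rewrite cint_aff in EL.
  replace (1 * cint g A B Cc Dd + - (1) * 0)%C with (cint g A B Cc Dd) in EL by ring.
  assert (HCe : CB (fun z => 1 * g z + - (1) * aff z)%C A B Cc Dd).
  { destruct HCg as [G1 G2]. destruct HCa as [H1 H2].
    assert (Ce : forall z, Ccont g z -> Ccont aff z -> Ccont (fun z => 1 * g z + - (1) * aff z)%C z).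
    { intros z Cg Ca eps1 Heps1. destruct (Cg (eps1/2) ltac:(lra)) as [d1 [Hd1 K1]].
      destruct (Ca (eps1/2) ltac:(lra)) as [d2 [Hd2 K2]].
      exists (Rmin d1 d2). split; [apply Rmin_pos; auto|]. intros z' Hz'.
      pose proof (Rmin_l d1 d2). pose proof (Rmin_r d1 d2).
      specialize (K1 z' ltac:(lra)). specialize (K2 z' ltac:(lra)).
      replace (1 * g z' + - (1) * aff z' - (1 * g z + - (1) * aff z))%C with ((g z' - g z) - (aff z' - aff z))%C by ring.
      eapply Rle_lt_trans; [apply Cmod_minus_tri|]. lra. }
    split; intros t Ht; split; apply Ce;
      first [apply (G1 t Ht) | apply (G2 t Ht) | apply (H1 t Ht) | apply (H2 t Ht)]. }
  assert (Hbd : forall z, inRect A B Cc Dd z -> Cmod ((fun z => 1 * g z + - (1) * aff z)%C z) <= e' * (D0 / 2 ^ n)).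
  { intros z Hz. pose proof (Hin z Hz) as Hz'.
    specialize (Kl z ltac:(lra)).
    replace ((fun z => 1 * g z + - (1) * aff z)%C z) with (g z - g (px, py) - l * (z - (px, py)))%C
      by (unfold aff, al; ring).
    eapply Rle_trans; [exact Kl|]. apply Rmult_le_compat_l; lra. }
  pose proof (cint_bound _ A B Cc Dd (e' * (D0 / 2 ^ n)) HCe ltac:(lra) ltac:(lra)) as CBd.
  rewrite EL in CBd.
  assert (Cmod (cint g A B Cc Dd) <= 4 * (D0 / 2 ^ n) * (e' * (D0 / 2 ^ n))).
  { replace (4 * (D0 / 2 ^ n) * (e' * (D0 / 2 ^ n))) with (4 * ((B - A) + (Dd - Cc)) * (e' * (D0 / 2 ^ n)))
      by (rewrite Hsz; ring).
    apply CBd.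
    - intros t Ht. split; apply Hbd; split; simpl; lra.
    - intros t Ht. split; apply Hbd; split; simpl; lra. }
  eapply Rle_trans; [exact Q7|].
  apply Rle_trans with (2 ^ n * 2 ^ n * (4 * (D0 / 2 ^ n) * (e' * (D0 / 2 ^ n)))).
  { apply Rmult_le_compat_l; [nra| auto]. }
  replace (2 ^ n * 2 ^ n * (4 * (D0 / 2 ^ n) * (e' * (D0 / 2 ^ n)))) with (4 * D0 ^ 2 * e') by (field; lra).
  unfold e'. apply Rle_trans with (4 * (D0 ^ 2 + 1) * (eps / (4 * (D0 ^ 2 + 1)))).
  { apply Rmult_le_compat_r; [left; exact He'| lra]. }
  right. field. pose proof (pow2_ge_0 D0). lra.
Qed.

Lemma cint_split_v' g a b c d m : CB g a m c d -> CB g m b c d -> a <= m <= b -> c <= d ->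
  cint g a b c d = (cint g a m c d + cint g m b c d)%C.
Proof.
  intros H1 H2 Hm Hcd.
  destruct (CB_ex g a m c d H1 ltac:(lra) Hcd) as [A1 [A2 [A3 [A4 _]]]].
  destruct (CB_ex g m b c d H2 ltac:(lra) Hcd) as [B1 [B2 [B3 [B4 _]]]].
  unfold cint, Hi.
  rewrite (RChasles _ a m b A1 B1), (RChasles _ a m b A2 B2), (RChasles _ a m b A3 B3), (RChasles _ a m b A4 B4).
  apply Ceq; simpl; ring.
Qed.

Lemma cint_split_h' g a b c d n : CB g a b c n -> CB g a b n d -> c <= n <= d -> a <= b ->
  cint g a b c d = (cint g a b c n + cint g a b n d)%C.
Proof.
  intros H1 H2 Hn Hab.
  destruct (CB_ex g a b c n H1 Hab ltac:(lra)) as [_ [_ [_ [_ [A5 [A6 [A7 A8]]]]]]].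
  destruct (CB_ex g a b n d H2 Hab ltac:(lra)) as [_ [_ [_ [_ [B5 [B6 [B7 B8]]]]]]].
  unfold cint, Vi.
  rewrite (RChasles _ c n d A5 B5), (RChasles _ c n d A6 B6), (RChasles _ c n d A7 B7), (RChasles _ c n d A8 B8).
  apply Ceq; simpl; ring.
Qed.

Lemma CB_from g a b c d : (forall z, inRect a b c d z -> (Re z = a \/ Re z = b \/ Im z = c \/ Im z = d) -> Ccont g z) ->
  a <= b -> c <= d -> CB g a b c d.
Proof.
  intros H Hab Hcd. split; intros t Ht; split; apply H; unfold inRect; simpl; try lra; tauto.
Qed.

Lemma neq_p (z : C) px py : Re z <> px \/ Im z <> py -> z <> (px, py).
Proof. intros [H|H] E; subst; simpl in H; auto. Qed.

Definition Qs (px py s : R) (z : C) := inRect (px - s) (px + s) (py - s) (py + s) z.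

Lemma frame g px py s r : 0 < r < s ->
  (forall z, Qs px py s z -> z <> (px, py) -> exists l, CD g z l) ->
  cint g (px - s) (px + s) (py - s) (py + s) = cint g (px - r) (px + r) (py - r) (py + r).
Proof.
  intros Hr Hg.
  assert (Cg : forall z, Qs px py s z -> z <> (px, py) -> Ccont g z).
  { intros z Hz Hn. destruct (Hg z Hz Hn) as [l Hl]. apply (CD_cont _ _ _ Hl). }
  assert (CBr : forall a b c d, px - s <= a <= b -> b <= px + s -> py - s <= c <= d -> d <= py + s ->
      a <> px -> b <> px -> c <> py -> d <> py -> CB g a b c d).
  { intros a b c d Ha Hb Hc Hd Ha' Hb' Hc' Hd'. apply CB_from; try lra.
    intros z [Hz1 Hz2] Hbd. apply Cg; [unfold Qs, inRect; lra|].
    apply neq_p. destruct Hbd as [E|[E|[E|E]]]; rewrite E; auto. }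
  assert (Gs : forall a b c d, px - s <= a <= b -> b <= px + s -> py - s <= c <= d -> d <= py + s ->
      (b < px \/ px < a \/ d < py \/ py < c) -> cint g a b c d = RtoC 0).
  { intros a b c d Ha Hb Hc Hd Hout. apply goursat; try lra.
    intros z [Hz1 Hz2]. apply Hg; [unfold Qs, inRect; lra|].
    apply neq_p. destruct Hout as [O|[O|[O|O]]]; [left|left|right|right]; lra. }
  rewrite (cint_split_v' g (px - s) (px + s) (py - s) (py + s) (px - r)); try lra;
    [| apply CBr; lra | apply CBr; lra].
  rewrite (cint_split_v' g (px - r) (px + s) (py - s) (py + s) (px + r)); try lra;
    [| apply CBr; lra | apply CBr; lra].
  rewrite (cint_split_h' g (px - r) (px + r) (py - s) (py + s) (py - r)); try lra;
    [| apply CBr; lra | apply CBr; lra].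
  rewrite (cint_split_h' g (px - r) (px + r) (py - r) (py + s) (py + r)); try lra;
    [| apply CBr; lra | apply CBr; lra].
  rewrite (Gs (px - s) (px - r) (py - s) (py + s)) by lra.
  rewrite (Gs (px + r) (px + s) (py - s) (py + s)) by lra.
  rewrite (Gs (px - r) (px + r) (py - s) (py - r)) by lra.
  rewrite (Gs (px - r) (px + r) (py + r) (py + s)) by lra.
  ring.
Qed.

Lemma Cmod_ge_im (z : C) : Rabs (Im z) <= Cmod z.
Proof. apply im_le_Cmod. Qed.

Lemma cint_bound_sq g px py r K : 0 < r ->
  CB g (px - r) (px + r) (py - r) (py + r) ->
  (forall z, Qs px py r z -> r <= Cmod (z - (px, py))%C -> Cmod (g z) <= K) ->
  Cmod (cint g (px - r) (px + r) (py - r) (py + r)) <= 16 * r * K.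
Proof.
  intros Hr HC H.
  assert (Hh : forall t y, px - r <= t <= px + r -> (y = py - r \/ y = py + r) -> Cmod (g (t, y)) <= K).
  { intros t y Ht Hy. apply H; [unfold Qs, inRect; simpl; lra|].
    eapply Rle_trans; [|apply Cmod_ge_im]. rewrite Im_minus. simpl.
    destruct Hy as [->| ->]; [rewrite Rabs_left by lra| rewrite Rabs_right by lra]; lra. }
  assert (Hv : forall t x, py - r <= t <= py + r -> (x = px - r \/ x = px + r) -> Cmod (g (x, t)) <= K).
  { intros t x Ht Hx. apply H; [unfold Qs, inRect; simpl; lra|].
    eapply Rle_trans; [|apply re_le_Cmod]. rewrite Re_minus. simpl.
    destruct Hx as [->| ->]; [rewrite Rabs_left by lra| rewrite Rabs_right by lra]; lra. }
  replace (16 * r * K) with (4 * ((px + r - (px - r)) + (py + r - (py - r))) * K) by ring.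
  apply cint_bound; auto; try lra.
  all: intros t Ht; split; first [apply Hh | apply Hv]; auto.
Qed.

Lemma Cmod_self (z : C) : Cmod (z - z)%C = 0.
Proof. replace (z - z)%C with (RtoC 0) by ring. apply Cmod_0. Qed.

Lemma Cmod_k2 p z : z <> p -> Cmod (k2 p z) = / (Cmod (z - p)%C ^ 2).
Proof.
  intros H. unfold k2. rewrite Cmod_inv by (apply Cmult_neq_0; apply sub_neq0; auto).
  rewrite Cmod_mult. f_equal. ring.
Qed.

Lemma Cmod_sub_pos z p : z <> p -> 0 < Cmod (z - p)%C.
Proof. intros H. apply Cmod_gt_0. apply sub_neq0. auto. Qed.

Lemma cauchy_est f px py s m d0 : 0 < s ->
  (forall z, Qs px py s z -> exists l, CD f z l) -> CD f (px, py) d0 ->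
  (forall z, Qs px py s z -> Cmod (f z) <= m) -> Cmod d0 <= 4 * m / s.
Proof.
  intros Hs Hf Hd0 Hm.
  set (p := (px, py)).
  assert (Hpin : Qs px py s p) by (unfold Qs, inRect, p; simpl; lra).
  assert (Hm0 : 0 <= m) by (eapply Rle_trans; [apply Cmod_ge_0| apply Hm; exact Hpin]).
  set (F := fun z => (f z * k2 p z)%C).
  set (G := fun z => (f p * k2 p z + d0 * k1 p z)%C).
  set (h := fun z => (F z - G z)%C).
  assert (DF : forall z, Qs px py s z -> z <> p ->
     (exists l, CD F z l) /\ (exists l, CD G z l) /\ (exists l, CD h z l) /\
     (exists l, CD (k1 p) z l) /\ (exists l, CD (k2 p) z l)).
  { intros z Hz Hn.
    destruct (Hf z Hz) as [lf Hlf]. destruct (CD_k1 p z Hn) as [l1 Hl1]. destruct (CD_k2 p z Hn) as [l2 Hl2].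
    pose proof (CD_mult f (k2 p) z lf l2 Hlf Hl2) as HF.
    pose proof (CD_plus _ _ z _ _ (CD_scal (k2 p) (f p) z l2 Hl2) (CD_scal (k1 p) d0 z l1 Hl1)) as HG.
    repeat split; eexists; [exact HF| exact HG| apply (CD_minus F G z _ _ HF HG) | exact Hl1 | exact Hl2]. }
  assert (CBr : forall (g : C -> C) r, 0 < r <= s -> (forall z, Qs px py s z -> z <> p -> exists l, CD g z l) ->
     CB g (px - r) (px + r) (py - r) (py + r)).
  { intros g r Hr Hg. apply CB_from; try lra. intros z [Hz1 Hz2] Hbd.
    assert (Hq : Qs px py s z) by (unfold Qs, inRect; lra).
    assert (Hn : z <> p) by (unfold p; apply neq_p; destruct Hbd as [E|[E|[E|E]]]; rewrite E; [left|left|right|right]; lra).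
    destruct (Hg z Hq Hn) as [l Hl]. apply (CD_cont _ _ _ Hl). }
  apply le_eps. intros eps Heps.
  destruct (Hd0 (eps / 4) ltac:(lra)) as [de [Hde Kd]].
  set (r := Rmin (s / 2) (de / 4)).
  assert (Hr : 0 < r /\ r <= s / 2 /\ r <= de / 4).
  { unfold r. pose proof (Rmin_l (s/2) (de/4)). pose proof (Rmin_r (s/2) (de/4)).
    assert (0 < Rmin (s/2) (de/4)) by (apply Rmin_pos; lra). lra. }
  assert (E1 : cint F (px - s) (px + s) (py - s) (py + s) = cint F (px - r) (px + r) (py - r) (py + r)).
  { apply frame; [lra|]. intros z Hz Hn. apply (DF z Hz Hn). }
  assert (CBh : CB h (px - r) (px + r) (py - r) (py + r)) by (apply CBr; [lra|]; intros; apply DF; auto).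
  assert (CBG : CB G (px - r) (px + r) (py - r) (py + r)) by (apply CBr; [lra|]; intros; apply DF; auto).
  assert (CB1 : CB (k1 p) (px - r) (px + r) (py - r) (py + r)) by (apply CBr; [lra|]; intros; apply DF; auto).
  assert (CB2 : CB (k2 p) (px - r) (px + r) (py - r) (py + r)) by (apply CBr; [lra|]; intros; apply DF; auto).
  assert (E2 : cint F (px - r) (px + r) (py - r) (py + r) =
     (cint h (px - r) (px + r) (py - r) (py + r) + f p * cint (k2 p) (px - r) (px + r) (py - r) (py + r)
      + d0 * cint (k1 p) (px - r) (px + r) (py - r) (py + r))%C).
  { rewrite (cint_ext F (fun z => 1 * h z + 1 * G z)%C) by (intros; unfold h; ring).
    rewrite cint_lin by (auto; lra).
    unfold G. rewrite cint_lin by (auto; lra). ring. }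
  assert (E3 : cint (k2 p) (px - r) (px + r) (py - r) (py + r) = RtoC 0).
  { apply cint_even; [lra| auto|]. intros. unfold p. apply k2_even. }
  pose proof (cint_k1_im px py r ltac:(lra)) as E4. fold p in E4.
  assert (E5 : Cmod (cint h (px - r) (px + r) (py - r) (py + r)) <= 16 * r * (eps / 4 / r)).
  { apply cint_bound_sq; [lra| auto|]. intros z Hz Hzr. fold p in Hzr.
    assert (Hn : z <> p).
    { intros E. rewrite E in Hzr. unfold p in Hzr. rewrite Cmod_self in Hzr. lra. }
    assert (Hzd : Cmod (z - p)%C < de).
    { destruct Hz as [Hz1 Hz2]. eapply Rle_lt_trans; [apply Cmod_le_sum|].
      rewrite Re_minus, Im_minus. unfold p; simpl.
      assert (Rabs (Re z - px) <= r) by (apply Rabs_le; lra).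
      assert (Rabs (Im z - py) <= r) by (apply Rabs_le; lra). lra. }
    specialize (Kd z Hzd).
    assert (Eh : h z = ((f z - f p - d0 * (z - p)) * k2 p z)%C).
    { unfold h, F, G, k1, k2. field; try split; try apply sub_neq0; auto. }
    rewrite Eh, Cmod_mult, Cmod_k2 by auto.
    pose proof (Cmod_sub_pos z p Hn).
    apply Rle_trans with (eps / 4 * Cmod (z - p)%C * / (Cmod (z - p)%C ^ 2)).
    { apply Rmult_le_compat_r; [left; apply Rinv_0_lt_compat; apply pow_lt; lra| exact Kd]. }
    replace (eps / 4 * Cmod (z - p)%C * / (Cmod (z - p)%C ^ 2)) with (eps / 4 / Cmod (z - p)%C) by (field; lra).
    unfold Rdiv. apply Rmult_le_compat_l; [lra|]. apply Rinv_le_contravar; lra. }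
  assert (E6 : Cmod (cint F (px - s) (px + s) (py - s) (py + s)) <= 16 * s * (m / s ^ 2)).
  { apply cint_bound_sq; [lra| |].
    { apply CBr; [lra|]. intros; apply DF; auto. }
    intros z Hz Hzs. fold p in Hzs.
    assert (Hn : z <> p).
    { intros E. rewrite E in Hzs. unfold p in Hzs. rewrite Cmod_self in Hzs. lra. }
    unfold F. rewrite Cmod_mult, Cmod_k2 by auto.
    pose proof (Hm z Hz). pose proof (Cmod_ge_0 (f z)).
    unfold Rdiv. apply Rmult_le_compat; auto.
    - left. apply Rinv_0_lt_compat. apply pow_lt. lra.
    - apply Rinv_le_contravar; [apply pow_lt; lra|]. apply pow_incr. lra. }
  rewrite E1, E2, E3 in E6.
  replace (cint h (px - r) (px + r) (py - r) (py + r) + f p * 0 + d0 * cint (k1 p) (px - r) (px + r) (py - r) (py + r))%C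
    with (cint h (px - r) (px + r) (py - r) (py + r) + d0 * cint (k1 p) (px - r) (px + r) (py - r) (py + r))%C in E6 by ring.
  set (W := cint (k1 p) (px - r) (px + r) (py - r) (py + r)) in *.
  set (Ih := cint h (px - r) (px + r) (py - r) (py + r)) in *.
  assert (HW : 4 <= Cmod W).
  { eapply Rle_trans; [exact E4|]. eapply Rle_trans; [apply Rle_abs| apply im_le_Cmod]. }
  assert (Hdw : Cmod (d0 * W)%C <= 16 * s * (m / s ^ 2) + 16 * r * (eps / 4 / r)).
  { replace (d0 * W)%C with ((Ih + d0 * W) - Ih)%C by ring.
    eapply Rle_trans; [apply Cmod_minus_tri|]. lra. }
  rewrite Cmod_mult in Hdw.
  replace (16 * s * (m / s ^ 2) + 16 * r * (eps / 4 / r)) with (4 * (4 * m / s + eps)) in Hdw by (field; lra).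
  pose proof (Cmod_ge_0 d0). nra.
Qed.

Lemma Re_conj_mult_le (D w : C) : Rabs (Re (Cconj D * w)%C) <= Cmod D * Cmod w.
Proof. eapply Rle_trans; [apply re_le_Cmod|]. rewrite Cmod_mult, Cmod_conj. lra. Qed.

Lemma Re_conj_self (D : C) : Re (Cconj D * D)%C = Cmod D ^ 2.
Proof. rewrite Cmod2_alt. destruct D as [x y]. simpl. ring. Qed.

Lemma cmvt (g : C -> C) u v L :
  (forall t, 0 <= t <= 1 -> exists l, CD g (u + RtoC t * (v - u))%C l /\ Cmod l <= L) ->
  Cmod (g v - g u)%C <= L * Cmod (v - u)%C.
Proof.
  intros H.
  assert (HL : 0 <= L).
  { destruct (H 0 ltac:(lra)) as [l [_ Hl]]. pose proof (Cmod_ge_0 l). lra. }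
  set (D := (g v - g u)%C).
  pose proof (Cmod_ge_0 D) as HD0. pose proof (Cmod_ge_0 (v - u)%C) as Hvu.
  destruct (Req_dec (Cmod D) 0) as [HD|HD].
  { rewrite HD. apply Rmult_le_pos; auto. }
  set (zt := fun t : R => (u + RtoC t * (v - u))%C).
  set (phi := fun t => Re (Cconj D * g (zt t))%C).
  assert (Hzt : forall t t', (zt t' - zt t)%C = (RtoC (t' - t) * (v - u))%C).
  { intros. unfold zt. rewrite RtoC_minus. ring. }
  assert (Hmv : Rabs (phi 1 - phi 0) <= Cmod D * L * Cmod (v - u)%C * (1 - 0)).
  { apply mvt_bound; [lra| |].
    - intros s Hs eps Heps.
      destruct (H s Hs) as [l [Hl _]].
      destruct (CD_cont _ _ _ Hl (eps / (Cmod D + 1)) ltac:(apply Rdiv_lt_0_compat; lra)) as [d1 [Hd1 K1]].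
      change (u + RtoC s * (v - u))%C with (zt s) in K1.
      exists (d1 / (Cmod (v - u)%C + 1)). split; [apply Rdiv_lt_0_compat; lra|].
      intros s' _ Hs'.
      assert (Hc : Cmod (zt s' - zt s)%C < d1).
      { rewrite Hzt, Cmod_mult, Cmod_R.
        apply Rle_lt_trans with (Rabs (s' - s) * (Cmod (v - u)%C + 1)).
        { apply Rmult_le_compat_l; [apply Rabs_pos| lra]. }
        apply (Rmult_lt_compat_r (Cmod (v - u)%C + 1)) in Hs'; [|lra].
        replace (d1 / (Cmod (v - u)%C + 1) * (Cmod (v - u)%C + 1)) with d1 in Hs' by (field; lra). exact Hs'. }
      specialize (K1 _ Hc).
      unfold phi. replace (Re (Cconj D * g (zt s'))%C - Re (Cconj D * g (zt s))%C)
        with (Re (Cconj D * (g (zt s') - g (zt s)))%C) by (rewrite <- Re_minus; f_equal; ring).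
      eapply Rle_lt_trans; [apply Re_conj_mult_le|].
      apply Rle_lt_trans with ((Cmod D + 1) * Cmod (g (zt s') - g (zt s))%C).
      { pose proof (Cmod_ge_0 (g (zt s') - g (zt s))%C). nra. }
      apply (Rmult_lt_compat_l (Cmod D + 1)) in K1; [|lra].
      replace ((Cmod D + 1) * (eps / (Cmod D + 1))) with eps in K1 by (field; lra). exact K1.
    - intros s Hs. destruct (H s ltac:(lra)) as [l [Hl HlL]].
      exists (Re (Cconj D * (l * (v - u)))%C). split.
      + apply is_derive_Reals. intros eps Heps.
        set (K := Cmod D * Cmod (v - u)%C + 1).
        assert (HK : 0 < K) by (unfold K; pose proof (Rmult_le_pos _ _ HD0 Hvu); lra).
        destruct (Hl (eps / (2 * K)) ltac:(apply Rdiv_lt_0_compat; lra)) as [d1 [Hd1 K1]].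
        assert (Hp : 0 < d1 / (Cmod (v - u)%C + 1)) by (apply Rdiv_lt_0_compat; lra).
        exists (mkposreal _ Hp). intros h Hh0 Hh. simpl in Hh.
        assert (Hc : Cmod (zt (s + h)%R - zt s)%C < d1).
        { rewrite Hzt, Cmod_mult, Cmod_R. replace (s + h - s) with h by ring.
          apply Rle_lt_trans with (Rabs h * (Cmod (v - u)%C + 1)).
          { apply Rmult_le_compat_l; [apply Rabs_pos| lra]. }
          apply (Rmult_lt_compat_r (Cmod (v - u)%C + 1)) in Hh; [|lra].
          replace (d1 / (Cmod (v - u)%C + 1) * (Cmod (v - u)%C + 1)) with d1 in Hh by (field; lra). exact Hh. }
        change (u + RtoC s * (v - u))%C with (zt s) in K1.
        specialize (K1 _ Hc).
        rewrite Hzt in K1. replace (s + h - s) with h in K1 by ring.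
        rewrite Cmod_mult, Cmod_R in K1.
        set (E := (g (zt (s + h)%R) - g (zt s) - l * (RtoC h * (v - u)))%C) in K1.
        assert (Eq : (phi (s + h) - phi s) / h - Re (Cconj D * (l * (v - u)))%C = Re (Cconj D * E)%C / h).
        { unfold phi, E.
          set (G1 := g (zt (s + h)%R)). set (G0 := g (zt s)).
          destruct D as [d1r d1i], l as [lr li], v as [vr vi], u as [ur ui], G1 as [a1 b1], G0 as [a0 b0].
          simpl. field. auto. }
        rewrite Eq. unfold Rdiv. rewrite Rabs_mult, Rabs_inv.
        pose proof (Rabs_pos_lt h Hh0).
        apply (Rmult_lt_reg_r (Rabs h)); auto. rewrite Rmult_assoc, Rinv_l, Rmult_1_r by lra.
        eapply Rle_lt_trans; [apply Re_conj_mult_le|].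
        apply Rle_lt_trans with (Cmod D * (eps / (2 * K) * (Rabs h * Cmod (v - u)%C))).
        { apply Rmult_le_compat_l; auto. }
        apply Rle_lt_trans with (eps / 2 * Rabs h).
        { replace (Cmod D * (eps / (2 * K) * (Rabs h * Cmod (v - u)%C))) with
            (eps / 2 * Rabs h * ((Cmod D * Cmod (v - u)%C) / K)) by (field; lra).
          assert ((Cmod D * Cmod (v - u)%C) / K <= 1).
          { apply (Rmult_le_reg_r K); auto. unfold Rdiv. rewrite Rmult_assoc, Rinv_l by lra. unfold K. lra. }
          assert (0 <= eps / 2 * Rabs h) by (apply Rmult_le_pos; lra).
          nra. }
        nra.
      + eapply Rle_trans; [apply Re_conj_mult_le|]. rewrite Cmod_mult.
        pose proof (Cmod_ge_0 l). pose proof (Rmult_le_pos _ _ HD0 Hvu). nra. }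
  assert (E1 : phi 1 - phi 0 = Cmod D ^ 2).
  { unfold phi, zt. replace (u + RtoC 1 * (v - u))%C with v by ring.
    replace (u + RtoC 0 * (v - u))%C with u by ring.
    rewrite <- Re_minus. replace (Cconj D * g v - Cconj D * g u)%C with (Cconj D * D)%C by (unfold D; ring).
    apply Re_conj_self. }
  rewrite E1, Rabs_right in Hmv by (apply Rle_ge, pow2_ge_0).
  assert (0 < Cmod D) by lra.
  apply (Rmult_le_reg_l (Cmod D)); auto. nra.
Qed.

Lemma norm2C_0r h : norm2C h (RtoC 0) = Cmod h.
Proof.
  unfold norm2C. rewrite Cmod_0. replace (Cmod h ^ 2 + 0 ^ 2) with (Cmod h ^ 2) by ring.
  apply sqrt_pow2. apply Cmod_ge_0.
Qed.

Lemma norm2C_0l k : norm2C (RtoC 0) k = Cmod k.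
Proof.
  unfold norm2C. rewrite Cmod_0. replace (0 ^ 2 + Cmod k ^ 2) with (Cmod k ^ 2) by ring.
  apply sqrt_pow2. apply Cmod_ge_0.
Qed.

Lemma Cmod_le_norm2C_l h k : Cmod h <= norm2C h k.
Proof.
  unfold norm2C. rewrite <- (sqrt_pow2 (Cmod h)) at 1 by apply Cmod_ge_0.
  apply sqrt_le_1_alt. pose proof (pow2_ge_0 (Cmod k)). lra.
Qed.

Lemma Cmod_le_norm2C_r h k : Cmod k <= norm2C h k.
Proof.
  unfold norm2C. rewrite <- (sqrt_pow2 (Cmod k)) at 1 by apply Cmod_ge_0.
  apply sqrt_le_1_alt. pose proof (pow2_ge_0 (Cmod h)). lra.
Qed.

Lemma cdiff_CDz f z w : cdiff f z w -> exists a, CD (fun x => f x w) z a.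
Proof.
  intros [a [b H]]. exists a. intros eps Heps.
  destruct (H eps Heps) as [d [Hd K]]. exists d. split; auto. intros z' Hz.
  destruct (Ceq_dec z' z) as [E|E].
  { subst. rewrite Cmod_self. replace (f z w - f z w - a * (z - z))%C with (RtoC 0) by ring.
    rewrite Cmod_0. lra. }
  assert (Hp : 0 < Cmod (z' - z)%C) by (apply Cmod_gt_0; apply sub_neq0; auto).
  specialize (K (z' - z)%C (RtoC 0)). rewrite norm2C_0r in K.
  specialize (K (conj Hp Hz)).
  replace (z + (z' - z))%C with z' in K by ring. replace (w + 0)%C with w in K by ring.
  replace (f z' w - f z w - a * (z' - z) - b * 0)%C with (f z' w - f z w - a * (z' - z))%C in K by ring.
  exact K.
Qed.

Lemma cdiff_CDw f z w : cdiff f z w -> exists b, CD (fun v => f z v) w b.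
Proof.
  intros [a [b H]]. exists b. intros eps Heps.
  destruct (H eps Heps) as [d [Hd K]]. exists d. split; auto. intros w' Hw.
  destruct (Ceq_dec w' w) as [E|E].
  { subst. rewrite Cmod_self. replace (f z w - f z w - b * (w - w))%C with (RtoC 0) by ring.
    rewrite Cmod_0. lra. }
  assert (Hp : 0 < Cmod (w' - w)%C) by (apply Cmod_gt_0; apply sub_neq0; auto).
  specialize (K (RtoC 0) (w' - w)%C). rewrite norm2C_0l in K.
  specialize (K (conj Hp Hw)).
  replace (w + (w' - w))%C with w' in K by ring. replace (z + 0)%C with z in K by ring.
  replace (f z w' - f z w - a * 0 - b * (w' - w))%C with (f z w' - f z w - b * (w' - w))%C in K by ring.
  exact K.
Qed.

Lemma cpz_CD f z w a : cpartial_z f z w a -> CD (fun x => f x w) z a.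
Proof.
  intros H eps Heps. destruct (H eps Heps) as [d [Hd K]]. exists d. split; auto.
  intros z' Hz. destruct (Ceq_dec z' z) as [E|E].
  { subst. rewrite Cmod_self. replace (f z w - f z w - a * (z - z))%C with (RtoC 0) by ring.
    rewrite Cmod_0. lra. }
  assert (Hn : (z' - z)%C <> RtoC 0) by (apply sub_neq0; auto).
  specialize (K (z' - z)%C Hn Hz). replace (z + (z' - z))%C with z' in K by ring.
  replace (f z' w - f z w - a * (z' - z))%C with ((z' - z) * ((f z' w - f z w) / (z' - z) - a))%C by (field; auto).
  rewrite Cmod_mult. rewrite Rmult_comm. apply Rmult_le_compat_r; [apply Cmod_ge_0| lra].
Qed.

Lemma cpz_ups f z w a zc c : cpartial_z f z w a -> c <> RtoC 0 ->
  cpartial_z (fun z' w' => ((f z' w' - f zc w') / c + zc)%C) z w (a / c)%C.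
Proof.
  intros H Hc eps Heps. pose proof (proj1 (Cmod_gt_0 c) Hc) as Hcp.
  destruct (H (eps * Cmod c) ltac:(nra)) as [d [Hd K]]. exists d. split; auto.
  intros h Hh Hhd. specialize (K h Hh Hhd).
  replace ((((f (z + h) w - f zc w) / c + zc) - ((f z w - f zc w) / c + zc)) / h - a / c)%C
    with (((f (z + h) w - f z w) / h - a) / c)%C by (field; auto).
  rewrite Cmod_div by auto. apply (Rmult_lt_reg_r (Cmod c)); auto.
  unfold Rdiv. rewrite Rmult_assoc, Rinv_l, Rmult_1_r by lra. exact K.
Qed.

Lemma cpw_ups f z w zc c b1 b2 : CD (fun v => f z v) w b1 -> CD (fun v => f zc v) w b2 -> c <> RtoC 0 ->
  cpartial_w (fun z' w' => ((f z' w' - f zc w') / c + zc)%C) z w ((b1 - b2) / c)%C.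
Proof.
  intros H1 H2 Hc eps Heps. pose proof (proj1 (Cmod_gt_0 c) Hc) as Hcp.
  pose proof (CD_minus _ _ w _ _ H1 H2) as H.
  destruct (H (eps * Cmod c / 2) ltac:(nra)) as [d [Hd K]]. exists d. split; auto.
  intros h Hh Hhd. specialize (K (w + h)%C). replace (w + h - w)%C with h in K by ring.
  specialize (K Hhd).
  pose proof (proj1 (Cmod_gt_0 h) Hh) as Hhp.
  replace ((((f z (w + h) - f zc (w + h)) / c + zc) - ((f z w - f zc w) / c + zc)) / h - (b1 - b2) / c)%C
    with (((f z (w + h) - f zc (w + h) - (f z w - f zc w) - (b1 - b2) * h) / h) / c)%C by (field; auto).
  rewrite !Cmod_div by auto.
  apply Rle_lt_trans with (eps * Cmod c / 2 * Cmod h / Cmod h / Cmod c).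
  { unfold Rdiv. apply Rmult_le_compat_r; [left; apply Rinv_0_lt_compat; auto|].
    apply Rmult_le_compat_r; [left; apply Rinv_0_lt_compat; auto|]. exact K. }
  replace (eps * Cmod c / 2 * Cmod h / Cmod h / Cmod c) with (eps / 2) by (field; lra). lra.
Qed.

Definition box (c : C) (r : R) (z : C) : Prop :=
  Rabs (Re z - Re c) <= r /\ Rabs (Im z - Im c) <= r.

Lemma box_Qs c r z : box c r z -> Qs (Re c) (Im c) r z.
Proof. intros [H1 H2]. apply Rabs_le_between' in H1. apply Rabs_le_between' in H2. split; lra. Qed.

Lemma Qs_box c r z : Qs (Re c) (Im c) r z -> box c r z.
Proof. intros [H1 H2]. split; apply Rabs_le; lra. Qed.

Lemma box_cmod c r z : Cmod (z - c)%C <= r -> box c r z.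
Proof.
  intros H. split.
  - rewrite <- Re_minus. eapply Rle_trans; [apply re_le_Cmod| exact H].
  - rewrite <- Im_minus. eapply Rle_trans; [apply im_le_Cmod| exact H].
Qed.

Lemma box_mono c r1 r2 z : r1 <= r2 -> box c r1 z -> box c r2 z.
Proof. intros H [H1 H2]. split; lra. Qed.

Lemma box_shift c r1 r2 z d : box c r1 z -> Cmod d <= r2 -> box c (r1 + r2) (z + d)%C.
Proof.
  intros [H1 H2] Hd. pose proof (re_le_Cmod d). pose proof (im_le_Cmod d). split.
  - replace (Re (z + d)%C - Re c) with ((Re z - Re c) + Re d) by (destruct z, d; simpl; ring).
    eapply Rle_trans; [apply Rabs_triang| lra].
  - replace (Im (z + d)%C - Im c) with ((Im z - Im c) + Im d) by (destruct z, d; simpl; ring).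
    eapply Rle_trans; [apply Rabs_triang| lra].
Qed.

Lemma box_seg c r u v t : box c r u -> box c r v -> 0 <= t <= 1 -> box c r (u + RtoC t * (v - u))%C.
Proof.
  intros [H1 H2] [H3 H4] Ht. split.
  - replace (Re (u + RtoC t * (v - u))%C - Re c) with ((1 - t) * (Re u - Re c) + t * (Re v - Re c))
      by (destruct u, v; simpl; ring).
    eapply Rle_trans; [apply Rabs_triang|]. rewrite !Rabs_mult, (Rabs_right t), (Rabs_right (1 - t)) by lra. nra.
  - replace (Im (u + RtoC t * (v - u))%C - Im c) with ((1 - t) * (Im u - Im c) + t * (Im v - Im c))
      by (destruct u, v; simpl; ring).
    eapply Rle_trans; [apply Rabs_triang|]. rewrite !Rabs_mult, (Rabs_right t), (Rabs_right (1 - t)) by lra. nra.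
Qed.

Lemma Cmod_seg u v t : 0 <= t <= 1 -> Cmod ((u + RtoC t * (v - u)) - u)%C <= Cmod (v - u)%C.
Proof.
  intros Ht. replace ((u + RtoC t * (v - u)) - u)%C with (RtoC t * (v - u))%C by ring.
  rewrite Cmod_mult, Cmod_R, Rabs_right by lra. pose proof (Cmod_ge_0 (v - u)%C). nra.
Qed.

Lemma box_center c r : 0 <= r -> box c r c.
Proof. intros H. split; replace (_ - _) with 0 by ring; rewrite Rabs_R0; lra. Qed.

Lemma dist2C_z z0 w0 z : dist2C z0 w0 z w0 = Cmod (z0 - z)%C.
Proof. unfold dist2C. replace (Cminus w0 w0) with (RtoC 0) by ring. apply norm2C_0r. Qed.

Lemma dist2C_w z0 w0 w : dist2C z0 w0 z0 w = Cmod (w0 - w)%C.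
Proof. unfold dist2C. replace (Cminus z0 z0) with (RtoC 0) by ring. apply norm2C_0l. Qed.

Lemma interior_z rho dl z0 w0 : 0 < dl -> sqC rho z0 w0 ->
  (forall z w, bdryC rho z w -> dl <= dist2C z0 w0 z w) -> forall x, box z0 dl x -> inIt rho x.
Proof.
  intros Hd [Hz Hw] Hb x [Hx1 Hx2].
  destruct z0 as [x0 y0]. destruct Hz as [Hz1 Hz2]. simpl in Hz1, Hz2, Hx1, Hx2.
  assert (T : forall q, inIt rho q -> ~ inIt_open rho q -> dl <= Cmod ((x0, y0) - q)%C).
  { intros q Hq Hn. rewrite <- dist2C_z with (w0 := w0). apply Hb. split; [split; auto|].
    intros [H1 _]. auto. }
  assert (A1 : x0 <= 1 - dl).
  { destruct (Rle_or_lt x0 (1 - dl)) as [h|h]; auto.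
    pose proof (T (1, y0) ltac:(split; simpl; lra) ltac:(intros [H1 _]; simpl in H1; lra)) as HH.
    rewrite Cmod_hsh, Rabs_left1 in HH by lra. lra. }
  assert (A2 : -1 + dl <= x0).
  { destruct (Rle_or_lt (-1 + dl) x0) as [h|h]; auto.
    pose proof (T (-1, y0) ltac:(split; simpl; lra) ltac:(intros [H1 _]; simpl in H1; lra)) as HH.
    rewrite Cmod_hsh, Rabs_right in HH by lra. lra. }
  assert (A3 : y0 <= rho - dl).
  { destruct (Rle_or_lt y0 (rho - dl)) as [h|h]; auto.
    pose proof (T (x0, rho) ltac:(split; simpl; lra) ltac:(intros [_ H1]; simpl in H1; lra)) as HH.
    rewrite Cmod_vsh, Rabs_left1 in HH by lra. lra. }
  assert (A4 : - rho + dl <= y0).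
  { destruct (Rle_or_lt (- rho + dl) y0) as [h|h]; auto.
    pose proof (T (x0, - rho) ltac:(split; simpl; lra) ltac:(intros [_ H1]; simpl in H1; lra)) as HH.
    rewrite Cmod_vsh, Rabs_right in HH by lra. lra. }
  apply Rabs_le_between' in Hx1. apply Rabs_le_between' in Hx2.
  split; lra.
Qed.

Lemma interior_w rho dl z0 w0 : 0 < dl -> sqC rho z0 w0 ->
  (forall z w, bdryC rho z w -> dl <= dist2C z0 w0 z w) -> forall x, box w0 dl x -> inIt rho x.
Proof.
  intros Hd [Hz Hw] Hb x [Hx1 Hx2].
  destruct w0 as [x0 y0]. destruct Hw as [Hz1 Hz2]. simpl in Hz1, Hz2, Hx1, Hx2.
  assert (T : forall q, inIt rho q -> ~ inIt_open rho q -> dl <= Cmod ((x0, y0) - q)%C).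
  { intros q Hq Hn. rewrite <- dist2C_w with (z0 := z0). apply Hb. split; [split; auto|].
    intros [_ H1]. auto. }
  assert (A1 : x0 <= 1 - dl).
  { destruct (Rle_or_lt x0 (1 - dl)) as [h|h]; auto.
    pose proof (T (1, y0) ltac:(split; simpl; lra) ltac:(intros [H1 _]; simpl in H1; lra)) as HH.
    rewrite Cmod_hsh, Rabs_left1 in HH by lra. lra. }
  assert (A2 : -1 + dl <= x0).
  { destruct (Rle_or_lt (-1 + dl) x0) as [h|h]; auto.
    pose proof (T (-1, y0) ltac:(split; simpl; lra) ltac:(intros [H1 _]; simpl in H1; lra)) as HH.
    rewrite Cmod_hsh, Rabs_right in HH by lra. lra. }
  assert (A3 : y0 <= rho - dl).
  { destruct (Rle_or_lt y0 (rho - dl)) as [h|h]; auto.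
    pose proof (T (x0, rho) ltac:(split; simpl; lra) ltac:(intros [_ H1]; simpl in H1; lra)) as HH.
    rewrite Cmod_vsh, Rabs_left1 in HH by lra. lra. }
  assert (A4 : - rho + dl <= y0).
  { destruct (Rle_or_lt (- rho + dl) y0) as [h|h]; auto.
    pose proof (T (x0, - rho) ltac:(split; simpl; lra) ltac:(intros [_ H1]; simpl in H1; lra)) as HH.
    rewrite Cmod_vsh, Rabs_right in HH by lra. lra. }
  apply Rabs_le_between' in Hx1. apply Rabs_le_between' in Hx2.
  split; lra.
Qed.

Definition Ctx rho dl (Z Zz : C -> C -> C) (zc wc : C) : Prop :=
  0 < dl /\ 0 < rho /\
  (forall z w, sqC rho z w -> cdiff Z z w) /\
  (forall z w, sqC rho z w -> cpartial_z Z z w (Zz z w)) /\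
  (forall z w, sqC rho z w -> inIt rho (Z z w)) /\
  (forall z w, sqC rho z w -> Cmod (Zz z w) < 1) /\
  (forall x, box zc dl x -> inIt rho x) /\ (forall x, box wc dl x -> inIt rho x).

Lemma inIt_bound rho z : inIt rho z -> Cmod z <= 1 + rho.
Proof.
  intros [H1 H2]. eapply Rle_trans; [apply Cmod_le_sum|].
  assert (Rabs (Re z) <= 1) by (apply Rabs_le; lra).
  assert (Rabs (Im z) <= rho) by (apply Rabs_le; lra). lra.
Qed.

Lemma box_add c r1 r2 x y : box c r1 x -> box c r2 y -> box c (r1 + r2) (x + (y - c))%C.
Proof.
  intros [H1 H2] [H3 H4]. split.
  - replace (Re (x + (y - c))%C - Re c) with ((Re x - Re c) + (Re y - Re c)) by (destruct x, y, c; simpl; ring).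
    eapply Rle_trans; [apply Rabs_triang| lra].
  - replace (Im (x + (y - c))%C - Im c) with ((Im x - Im c) + (Im y - Im c)) by (destruct x, y, c; simpl; ring).
    eapply Rle_trans; [apply Rabs_triang| lra].
Qed.

Lemma box_trans c r1 r2 x y : box c r1 x -> box x r2 y -> box c (r1 + r2) y.
Proof.
  intros [H1 H2] [H3 H4]. split.
  - replace (Re y - Re c) with ((Re x - Re c) + (Re y - Re x)) by ring.
    eapply Rle_trans; [apply Rabs_triang| lra].
  - replace (Im y - Im c) with ((Im x - Im c) + (Im y - Im x)) by ring.
    eapply Rle_trans; [apply Rabs_triang| lra].
Qed.

Lemma C_eta (z : C) : z = (Re z, Im z).
Proof. destruct z. reflexivity. Qed.

Lemma cauchy_box f c s m d0 : 0 < s ->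
  (forall z, box c s z -> exists l, CD f z l) -> CD f c d0 ->
  (forall z, box c s z -> Cmod (f z) <= m) -> Cmod d0 <= 4 * m / s.
Proof.
  intros Hs H1 H2 H3. apply (cauchy_est f (Re c) (Im c) s m d0 Hs).
  - intros z Hz. apply H1. apply Qs_box. exact Hz.
  - rewrite <- C_eta. exact H2.
  - intros z Hz. apply H3. apply Qs_box. exact Hz.
Qed.



Lemma L_Zw rho dl Z Zz zc wc z' w' b : Ctx rho dl Z Zz zc wc ->
  box zc (dl / 2) z' -> box wc (dl / 2) w' -> CD (fun v => Z z' v) w' b ->
  Cmod b <= 8 * (1 + rho) / dl.
Proof.
  intros [Hdl [Hrho [Hcd [Hpz [Hin [Hlt [Hbz Hbw]]]]]]] Hz Hw Hb.
  replace (8 * (1 + rho) / dl) with (4 * (1 + rho) / (dl / 2)) by (field; lra).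
  apply (cauchy_box (fun v => Z z' v) w' (dl / 2)); [lra| | exact Hb|].
  - intros v Hv. apply cdiff_CDw. apply Hcd. split.
    + apply Hbz. apply (box_mono _ (dl / 2)); [lra| auto].
    + apply Hbw. replace dl with (dl / 2 + dl / 2) by field. apply (box_trans _ _ _ w'); auto.
  - intros v Hv. apply inIt_bound. apply Hin. split.
    + apply Hbz. apply (box_mono _ (dl / 2)); [lra| auto].
    + apply Hbw. replace dl with (dl / 2 + dl / 2) by field. apply (box_trans _ _ _ w'); auto.
Qed.

Lemma L_Zz1 rho dl Z Zz zc wc x w : Ctx rho dl Z Zz zc wc ->
  box zc (dl / 2) x -> box wc (dl / 2) w ->
  Cmod (Zz x w - Zz zc w)%C <= 8 * Cmod (x - zc)%C / dl.
Proof.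
  intros HC Hx Hw. pose proof HC as [Hdl [Hrho [Hcd [Hpz [Hin [Hlt [Hbz Hbw]]]]]]].
  set (d := (x - zc)%C).
  assert (Hwi : inIt rho w) by (apply Hbw; apply (box_mono _ (dl / 2)); [lra| auto]).
  assert (Sq : forall y, box zc dl y -> sqC rho y w) by (intros; split; auto).
  replace (8 * Cmod d / dl) with (4 * Cmod d / (dl / 2)) by (field; lra).
  apply (cauchy_box (fun y => Z (y + d)%C w - Z y w)%C zc (dl / 2)); [lra| | |].
  - intros y Hy. eexists. apply CD_minus.
    + apply (CD_shift (fun u => Z u w)). apply cpz_CD. apply Hpz. apply Sq.
      replace dl with (dl / 2 + dl / 2) by field. unfold d. apply box_add; auto.
    + apply cpz_CD. apply Hpz. apply Sq. apply (box_mono _ (dl / 2)); [lra| auto].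
  - replace (Zz x w - Zz zc w)%C with (Zz (zc + d)%C w - Zz zc w)%C by (unfold d; f_equal; f_equal; ring).
    apply CD_minus.
    + apply (CD_shift (fun u => Z u w)). apply cpz_CD. apply Hpz. apply Sq.
      replace (zc + d)%C with x by (unfold d; ring). apply (box_mono _ (dl / 2)); [lra| auto].
    + apply cpz_CD. apply Hpz. apply Sq. apply box_center. lra.
  - intros y Hy.
    assert (Hy2 : box zc dl (y + d)%C).
    { replace dl with (dl / 2 + dl / 2) by field. unfold d. apply box_add; auto. }
    assert (Hy1 : box zc dl y) by (apply (box_mono _ (dl / 2)); [lra| auto]).
    replace (Cmod d) with (1 * Cmod ((y + d) - y)%C) by (replace ((y + d) - y)%C with d by ring; ring).
    apply (cmvt (fun y => Z y w)). intros t Ht. exists (Zz (y + RtoC t * ((y + d) - y))%C w). split.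
    + apply cpz_CD. apply Hpz. apply Sq. apply box_seg; auto.
    + left. apply Hlt. apply Sq. apply box_seg; auto.
Qed.

Lemma L_Zz2 rho dl Z Zz zc wc w : Ctx rho dl Z Zz zc wc -> box wc (dl / 2) w ->
  Cmod (Zz zc w - Zz zc wc)%C <= 8 * (8 * (1 + rho) / dl) * Cmod (w - wc)%C / dl.
Proof.
  intros HC Hw. pose proof HC as [Hdl [Hrho [Hcd [Hpz [Hin [Hlt [Hbz Hbw]]]]]]].
  set (A := 8 * (1 + rho) / dl).
  assert (Hw1 : box wc dl w) by (apply (box_mono _ (dl / 2)); [lra| auto]).
  assert (Hwc : box wc dl wc) by (apply box_center; lra).
  replace (8 * A * Cmod (w - wc)%C / dl) with (4 * (A * Cmod (w - wc)%C) / (dl / 2)) by (field; lra).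
  apply (cauchy_box (fun y => Z y w - Z y wc)%C zc (dl / 2)); [lra| | |].
  - intros y Hy. assert (Hy1 : box zc dl y) by (apply (box_mono _ (dl / 2)); [lra| auto]).
    eexists. apply CD_minus; apply cpz_CD; apply Hpz; split; auto.
  - apply CD_minus; apply cpz_CD; apply Hpz; split; auto; apply Hbz, box_center; lra.
  - intros y Hy. assert (Hy1 : box zc dl y) by (apply (box_mono _ (dl / 2)); [lra| auto]).
    apply (cmvt (fun v => Z y v)). intros t Ht.
    assert (Hv : box wc (dl / 2) (wc + RtoC t * (w - wc))%C) by (apply box_seg; auto; apply box_center; lra).
    assert (Hv1 : box wc dl (wc + RtoC t * (w - wc))%C) by (apply (box_mono _ (dl / 2)); [lra| auto]).
    destruct (cdiff_CDw Z y (wc + RtoC t * (w - wc))%C (Hcd _ _ (conj (Hbz _ Hy1) (Hbw _ Hv1)))) as [b Hb].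
    exists b. split; auto. apply (L_Zw rho dl Z Zz zc wc y _ b HC Hy Hv Hb).
Qed.

Lemma L_Zz rho dl Z Zz zc wc x w : Ctx rho dl Z Zz zc wc ->
  box zc (dl / 2) x -> box wc (dl / 2) w ->
  Cmod (Zz x w - Zz zc wc)%C <= 8 * Cmod (x - zc)%C / dl + 8 * (8 * (1 + rho) / dl) * Cmod (w - wc)%C / dl.
Proof.
  intros HC Hx Hw.
  pose proof (L_Zz1 rho dl Z Zz zc wc x w HC Hx Hw).
  pose proof (L_Zz2 rho dl Z Zz zc wc w HC Hw).
  replace (Zz x w - Zz zc wc)%C with ((Zz x w - Zz zc w) + (Zz zc w - Zz zc wc))%C by ring.
  eapply Rle_trans; [apply Cmod_triangle| lra].
Qed.

Lemma L_b rho dl Z Zz zc wc z w b1 b2 : Ctx rho dl Z Zz zc wc ->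
  box zc (dl / 2) z -> box wc (dl / 2) w ->
  CD (fun v => Z z v) w b1 -> CD (fun v => Z zc v) w b2 ->
  Cmod (b1 - b2)%C <= 8 * Cmod (z - zc)%C / dl.
Proof.
  intros HC Hz Hw H1 H2. pose proof HC as [Hdl [Hrho [Hcd [Hpz [Hin [Hlt [Hbz Hbw]]]]]]].
  assert (Hz1 : box zc dl z) by (apply (box_mono _ (dl / 2)); [lra| auto]).
  assert (Hzc : box zc dl zc) by (apply box_center; lra).
  replace (8 * Cmod (z - zc)%C / dl) with (4 * (1 * Cmod (z - zc)%C) / (dl / 2)) by (field; lra).
  apply (cauchy_box (fun v => Z z v - Z zc v)%C w (dl / 2)); [lra| | |].
  - intros v Hv.
    assert (Hv1 : box wc dl v) by (replace dl with (dl / 2 + dl / 2) by field; apply (box_trans _ _ _ w); auto).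
    destruct (cdiff_CDw Z z v (Hcd _ _ (conj (Hbz _ Hz1) (Hbw _ Hv1)))) as [c1 Hc1].
    destruct (cdiff_CDw Z zc v (Hcd _ _ (conj (Hbz _ Hzc) (Hbw _ Hv1)))) as [c2 Hc2].
    eexists. apply CD_minus; eauto.
  - apply CD_minus; auto.
  - intros v Hv.
    assert (Hv1 : box wc dl v) by (replace dl with (dl / 2 + dl / 2) by field; apply (box_trans _ _ _ w); auto).
    apply (cmvt (fun y => Z y v)). intros t Ht.
    assert (Hs : box zc (dl / 2) (zc + RtoC t * (z - zc))%C) by (apply box_seg; auto; apply box_center; lra).
    assert (Hs1 : box zc dl (zc + RtoC t * (z - zc))%C) by (apply (box_mono _ (dl / 2)); [lra| auto]).
    exists (Zz (zc + RtoC t * (z - zc))%C v). split.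
    + apply cpz_CD. apply Hpz. split; auto.
    + left. apply Hlt. split; auto.
Qed.

Lemma L_U rho dl Z Zz zc wc z w : Ctx rho dl Z Zz zc wc ->
  box zc (dl / 2) z -> box wc (dl / 2) w ->
  Cmod (Z z w - Z zc w - Zz zc wc * (z - zc))%C <=
    (8 * Cmod (z - zc)%C / dl + 8 * (8 * (1 + rho) / dl) * Cmod (w - wc)%C / dl) * Cmod (z - zc)%C.
Proof.
  intros HC Hz Hw. pose proof HC as [Hdl [Hrho [Hcd [Hpz [Hin [Hlt [Hbz Hbw]]]]]]].
  set (c := Zz zc wc).
  replace (Z z w - Z zc w - c * (z - zc))%C with ((Z z w - c * z) - (Z zc w - c * zc))%C by ring.
  apply (cmvt (fun y => Z y w - c * y)%C). intros t Ht.
  assert (Hs : box zc (dl / 2) (zc + RtoC t * (z - zc))%C) by (apply box_seg; auto; apply box_center; lra).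
  assert (Hs1 : box zc dl (zc + RtoC t * (z - zc))%C) by (apply (box_mono _ (dl / 2)); [lra| auto]).
  assert (Hw1 : box wc dl w) by (apply (box_mono _ (dl / 2)); [lra| auto]).
  exists (Zz (zc + RtoC t * (z - zc))%C w - c * 1)%C. split.
  - apply CD_minus; [apply cpz_CD; apply Hpz; split; auto| apply (CD_scal (fun x => x)); apply CD_id].
  - replace (c * 1)%C with c by ring. unfold c.
    eapply Rle_trans; [apply (L_Zz rho dl Z Zz zc wc _ w HC Hs Hw)|].
    pose proof (Cmod_seg zc z t Ht).
    assert (0 < dl) by auto. apply Rplus_le_compat_r.
    unfold Rdiv. apply Rmult_le_compat_r; [left; apply Rinv_0_lt_compat; auto|]. lra.
Qed.

Lemma part2 :
  (forall (rho : R) (Z Zz : nat -> C -> C -> C) (B : nat -> C -> C -> Prop)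
          (zc wc : nat -> C),
     0 < rho ->
     (forall j, holo_near (sqC rho) (Z j)) ->
     (forall j z w, sqC rho z w -> cpartial_z (Z j) z w (Zz j z w)) ->
     (forall j z w, sqC rho z w -> inIt rho (Z j z w)) ->
     (forall j z w, sqC rho z w -> 0 < Cmod (Zz j z w) < 1) ->
     (forall j z w, B j z w -> sqC rho z w) ->
     (forall j, B j (zc j) (wc j)) ->
     (forall eps, 0 < eps -> exists N, forall j, (N <= j)%nat ->
        forall z w z' w', B j z w -> B j z' w' ->
          dist2C z w z' w' <= eps * Cmod (Zz j (zc j) (wc j))) ->
     (exists delta, 0 < delta /\ forall j z w, bdryC rho z w ->
        delta <= dist2C (zc j) (wc j) z w) ->
     forall eps, 0 < eps -> exists N, forall j, (N <= j)%nat ->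
       forall z w, B j z w ->
         exists a b,
           cpartial_z (UpsilonC Z Zz zc wc j) z w a /\
           cpartial_w (UpsilonC Z Zz zc wc j) z w b /\
           Cmod (Cminus (UpsilonC Z Zz zc wc j z w) z)
             + sqrt (Cmod (Cminus a (RtoC 1)) ^ 2 + Cmod b ^ 2) <= eps).
Proof.
  intros rho Z Zz B zc wc Hrho Hholo HZz HZin Hmod HB HBc Hdiam [dl [Hdl Hbd]] eps Heps.
  set (A := 8 * (1 + rho) / dl).
  assert (HA : 0 <= A) by (unfold A; apply Rmult_le_pos; [lra| left; apply Rinv_0_lt_compat; lra]).
  set (K2 := 8 / dl + 8 * A / dl).
  assert (HK2 : 0 <= K2).
  { unfold K2. assert (0 < / dl) by (apply Rinv_0_lt_compat; lra). unfold Rdiv. nra. }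
  set (Kb := 8 / dl).
  assert (HKb : 0 <= Kb) by (unfold Kb; unfold Rdiv; assert (0 < / dl) by (apply Rinv_0_lt_compat; lra); nra).
  set (e1 := Rmin (Rmin (dl / 2) 1) (eps / (2 * K2 + Kb + 1))).
  assert (He1 : 0 < e1 /\ e1 <= dl / 2 /\ e1 <= 1 /\ e1 <= eps / (2 * K2 + Kb + 1)).
  { unfold e1. pose proof (Rmin_l (Rmin (dl / 2) 1) (eps / (2 * K2 + Kb + 1))).
    pose proof (Rmin_r (Rmin (dl / 2) 1) (eps / (2 * K2 + Kb + 1))).
    pose proof (Rmin_l (dl / 2) 1). pose proof (Rmin_r (dl / 2) 1).
    assert (0 < Rmin (Rmin (dl / 2) 1) (eps / (2 * K2 + Kb + 1))).
    { apply Rmin_pos; [apply Rmin_pos; lra| apply Rdiv_lt_0_compat; lra]. }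
    lra. }
  destruct He1 as [He1 [He1a [He1b He1c]]].
  destruct (Hdiam e1 He1) as [N HN]. exists N. intros j Hj z w Hzw.
  assert (HC : Ctx rho dl (Z j) (Zz j) (zc j) (wc j)).
  { destruct (Hholo j) as [U [HU [HKU HUd]]].
    pose proof (HB j _ _ (HBc j)) as Hsq0.
    refine (conj Hdl (conj Hrho (conj _ (conj _ (conj _ (conj _ (conj _ _))))))).
    - intros z' w' Hq. apply HUd. apply HKU. exact Hq.
    - intros z' w' Hq. apply HZz. exact Hq.
    - intros z' w' Hq. apply HZin. exact Hq.
    - intros z' w' Hq. apply (Hmod j z' w' Hq).
    - apply (interior_z rho dl (zc j) (wc j) Hdl Hsq0). intros; apply Hbd; auto.
    - apply (interior_w rho dl (zc j) (wc j) Hdl Hsq0). intros; apply Hbd; auto. }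
  set (c := Zz j (zc j) (wc j)).
  pose proof (HB j z w Hzw) as Hsq.
  pose proof (HB j _ _ (HBc j)) as Hsq0.
  assert (Hc : 0 < Cmod c < 1) by (apply Hmod; exact Hsq0).
  assert (Hc0 : c <> RtoC 0) by (intro E; rewrite E, Cmod_0 in Hc; lra).
  pose proof (HN j Hj z w (zc j) (wc j) Hzw (HBc j)) as Hd. fold c in Hd.
  set (d := dist2C z w (zc j) (wc j)) in Hd.
  assert (Hdz : Cmod (z - zc j)%C <= d) by (unfold d, dist2C; apply Cmod_le_norm2C_l).
  assert (Hdw : Cmod (w - wc j)%C <= d) by (unfold d, dist2C; apply Cmod_le_norm2C_r).
  assert (Hd0 : 0 <= d) by (pose proof (Cmod_ge_0 (z - zc j)%C); lra).
  assert (Hd1 : d <= e1) by nra.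
  assert (Hbz : box (zc j) (dl / 2) z) by (apply box_cmod; lra).
  assert (Hbw : box (wc j) (dl / 2) w) by (apply box_cmod; lra).
  destruct Hsq as [Hzi Hwi]. destruct Hsq0 as [Hzc_in Hwc_in].
  pose proof HC as [_ [_ [Hcd _]]].
  destruct (cdiff_CDw (Z j) z w (Hcd z w (conj Hzi Hwi))) as [b1 Hb1].
  destruct (cdiff_CDw (Z j) (zc j) w (Hcd _ _ (conj Hzc_in Hwi))) as [b2 Hb2].
  exists (Zz j z w / c)%C, ((b1 - b2) / c)%C.
  split; [|split].
  - unfold UpsilonC. apply (cpz_ups (Z j) z w (Zz j z w) (zc j) c); auto. apply HZz; split; auto.
  - unfold UpsilonC. apply (cpw_ups (Z j) z w (zc j) c b1 b2); auto.
  - pose proof (L_Zz rho dl (Z j) (Zz j) (zc j) (wc j) z w HC Hbz Hbw) as E1. fold c A in E1.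
    pose proof (L_b rho dl (Z j) (Zz j) (zc j) (wc j) z w b1 b2 HC Hbz Hbw Hb1 Hb2) as E2.
    pose proof (L_U rho dl (Z j) (Zz j) (zc j) (wc j) z w HC Hbz Hbw) as E3. fold c A in E3.
    set (dz := Cmod (z - zc j)%C) in *. set (dw := Cmod (w - wc j)%C) in *.
    set (idl := / dl).
    assert (Hidl : 0 < idl) by (apply Rinv_0_lt_compat; lra).
    assert (HP : 8 * dz / dl + 8 * A * dw / dl <= K2 * d).
    { unfold K2, Rdiv. fold idl. pose proof (Rmult_le_pos _ _ HA (Rlt_le _ _ Hidl)). nra. }
    assert (Hdz0 : 0 <= dz) by apply Cmod_ge_0.
    set (r := d / Cmod c).
    assert (Hr : r <= e1).
    { unfold r. apply (Rmult_le_reg_r (Cmod c)); [lra|]. unfold Rdiv.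
      rewrite Rmult_assoc, Rinv_l, Rmult_1_r by lra. exact Hd. }
    assert (Hr0 : 0 <= r) by (unfold r; apply Rmult_le_pos; [lra| left; apply Rinv_0_lt_compat; lra]).
    assert (Ha : Cmod (Zz j z w / c - RtoC 1)%C <= K2 * e1).
    { replace (Zz j z w / c - RtoC 1)%C with ((Zz j z w - c) / c)%C by (field; auto).
      rewrite Cmod_div by auto.
      apply Rle_trans with (K2 * d / Cmod c).
      { unfold Rdiv. apply Rmult_le_compat_r; [left; apply Rinv_0_lt_compat; lra| lra]. }
      unfold Rdiv. rewrite Rmult_assoc. fold (Rdiv d (Cmod c)). fold r.
      apply Rmult_le_compat_l; lra. }
    assert (Hb : Cmod ((b1 - b2) / c)%C <= Kb * e1).
    { rewrite Cmod_div by auto.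
      apply Rle_trans with (Kb * d / Cmod c).
      { unfold Rdiv. apply Rmult_le_compat_r; [left; apply Rinv_0_lt_compat; lra|].
        eapply Rle_trans; [exact E2|]. unfold Kb, Rdiv. fold idl. nra. }
      unfold Rdiv. rewrite Rmult_assoc. fold (Rdiv d (Cmod c)). fold r.
      apply Rmult_le_compat_l; lra. }
    assert (Hu : Cmod (UpsilonC Z Zz zc wc j z w - z)%C <= K2 * e1).
    { unfold UpsilonC. fold c.
      replace ((Z j z w - Z j (zc j) w) / c + zc j - z)%C with
        ((Z j z w - Z j (zc j) w - c * (z - zc j)) / c)%C by (field; auto).
      rewrite Cmod_div by auto.
      apply Rle_trans with (K2 * d * dz / Cmod c).
      { unfold Rdiv. apply Rmult_le_compat_r; [left; apply Rinv_0_lt_compat; lra|].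
        eapply Rle_trans; [exact E3|]. apply Rmult_le_compat_r; auto. }
      replace (K2 * d * dz / Cmod c) with (K2 * dz * r) by (unfold r; field; lra).
      assert (dz <= 1) by lra.
      assert (K2 * dz <= K2) by nra.
      assert (0 <= K2 * dz) by nra. nra. }
    pose proof (sqrt_sum_le (Cmod (Zz j z w / c - RtoC 1)%C) (Cmod ((b1 - b2) / c)%C)) as Hs.
    rewrite (Rabs_right (Cmod (Zz j z w / c - RtoC 1)%C)), (Rabs_right (Cmod ((b1 - b2) / c)%C)) in Hs
      by (apply Rle_ge, Cmod_ge_0).
    assert ((2 * K2 + Kb) * e1 <= eps).
    { apply Rle_trans with ((2 * K2 + Kb) * (eps / (2 * K2 + Kb + 1))).
      { apply Rmult_le_compat_l; lra. }
      apply (Rmult_le_reg_r (2 * K2 + Kb + 1)); [lra|].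
      replace ((2 * K2 + Kb) * (eps / (2 * K2 + Kb + 1)) * (2 * K2 + Kb + 1)) with ((2 * K2 + Kb) * eps) by (field; lra).
      nra. }
    lra.
Qed.

Theorem propositionB3 :
  (* (i) real case *)
  (forall (X X1 X2 : nat -> R -> R -> R) (B : nat -> R -> R -> Prop)
          (x0 y0 : nat -> R),
     (* X_j is C^2 on I^2, with first partials X1_j = d_x X_j, X2_j = d_y X_j *)
     (forall j x y, sq x y ->
        rpartial_x sq (X j) x y (X1 j x y) /\ rpartial_y sq (X j) x y (X2 j x y)) ->
     (forall j, cont_on sq (X j) /\ C1_on sq (X1 j) /\ C1_on sq (X2 j)) ->
     (* d_x X_j does not vanish *)
     (forall j x y, sq x y -> X1 j x y <> 0) ->
     (* B_j subset of I^2, diam B_j -> 0, (x0_j,y0_j) in B_j *)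
     (forall j x y, B j x y -> sq x y) ->
     (forall eps, 0 < eps -> exists N, forall j, (N <= j)%nat ->
        forall x y x' y', B j x y -> B j x' y' -> dist2R x y x' y' <= eps) ->
     (forall j, B j (x0 j) (y0 j)) ->
     (* || d_x log|d_x X_j| ||_C0 and || d_y log|d_x X_j| ||_C0 bounded *)
     (exists M, forall j x y L, sq x y ->
        rpartial_x sq (fun u v => ln (Rabs (X1 j u v))) x y L -> Rabs L <= M) ->
     (exists M, forall j x y L, sq x y ->
        rpartial_y sq (fun u v => ln (Rabs (X1 j u v))) x y L -> Rabs L <= M) ->
     (* sup_{B_j} ( |Ups_j - x| + ||D Ups_j - (1,0)|| ) -> 0 *)
     forall eps, 0 < eps -> exists N, forall j, (N <= j)%nat ->
       forall x y, B j x y ->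
         exists a b,
           rpartial_x sq (Upsilon X X1 x0 y0 j) x y a /\
           rpartial_y sq (Upsilon X X1 x0 y0 j) x y b /\
           Rabs (Upsilon X X1 x0 y0 j x y - x) + sqrt ((a - 1) ^ 2 + b ^ 2) <= eps)
  /\
  (* (ii) holomorphic case *)
  (forall (rho : R) (Z Zz : nat -> C -> C -> C) (B : nat -> C -> C -> Prop)
          (zc wc : nat -> C),
     0 < rho ->
     (* Z_j holomorphic on tilde I^2, with Zz_j = d_z Z_j, values in tilde I *)
     (forall j, holo_near (sqC rho) (Z j)) ->
     (forall j z w, sqC rho z w -> cpartial_z (Z j) z w (Zz j z w)) ->
     (forall j z w, sqC rho z w -> inIt rho (Z j z w)) ->
     (* 0 < |d_z Z_j| < 1 *)
     (forall j z w, sqC rho z w -> 0 < Cmod (Zz j z w) < 1) ->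
     (* B_j subset of tilde I^2, (z_j,w_j) in B_j *)
     (forall j z w, B j z w -> sqC rho z w) ->
     (forall j, B j (zc j) (wc j)) ->
     (* diam B_j / |d_z Z_j(z_j,w_j)| -> 0 *)
     (forall eps, 0 < eps -> exists N, forall j, (N <= j)%nat ->
        forall z w z' w', B j z w -> B j z' w' ->
          dist2C z w z' w' <= eps * Cmod (Zz j (zc j) (wc j))) ->
     (* (z_j,w_j) uniformly away from the boundary of tilde I^2 *)
     (exists delta, 0 < delta /\ forall j z w, bdryC rho z w ->
        delta <= dist2C (zc j) (wc j) z w) ->
     (* sup_{B_j} ( |tUps_j - z| + ||D tUps_j - (1,0)|| ) -> 0 *)
     forall eps, 0 < eps -> exists N, forall j, (N <= j)%nat ->
       forall z w, B j z w ->
         exists a b,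
           cpartial_z (UpsilonC Z Zz zc wc j) z w a /\
           cpartial_w (UpsilonC Z Zz zc wc j) z w b /\
           Cmod (Cminus (UpsilonC Z Zz zc wc j z w) z)
             + sqrt (Cmod (Cminus a (RtoC 1)) ^ 2 + Cmod b ^ 2) <= eps).
Proof.
  split; [exact part1 | exact part2].
Qed.
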